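(* Let $D\subset\mathbb{C}$ be a connected domain and let $f,g$ be non-constant meromorphic functions on $D$ with the same phase, i.e. $f(z)/|f(z)|=g(z)/|g(z)|$ at all points of $D$ that are neither zeros nor poles of $f$ or $g$. Then the following are equivalent: (i) $f\neq g$; (ii) there exists $c\in\mathbb{C}\setminus\{0\}$ such that the phases of $f+c$ and $g+c$ are not equal (as functions on the set of points of $D$ where both are defined); (iii) for every $c\in\mathbb{C}\setminus\{0\}$ the phases of $f+c$ and $g+c$ are not equal (as functions on the set of points of $D$ where both are defined).
   Context: For a meromorphic function $h$ on $D$, its phase is $z\mapsto h(z)/|h(z)|$, defined on the set of points of $D$ where $h(z)\in\mathbb{C}\setminus\{0\}$. *)

(* Defs.v *)
From Stdlib Require Import Reals.
Open Scope R_scope.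

Definition Cx : Type := (R * R)%type.

Definition C0 : Cx := (0, 0).
Definition Cadd (z w : Cx) : Cx := (fst z + fst w, snd z + snd w).
Definition Copp (z : Cx) : Cx := (- fst z, - snd z).
Definition Csub (z w : Cx) : Cx := Cadd z (Copp w).
Definition Cmul (z w : Cx) : Cx :=
  (fst z * fst w - snd z * snd w, fst z * snd w + snd z * fst w).
Definition Cinv (z : Cx) : Cx :=
  let d := fst z * fst z + snd z * snd z in (fst z / d, - snd z / d).
Definition Cdiv (z w : Cx) : Cx := Cmul z (Cinv w).
Definition Cmod (z : Cx) : R := sqrt (fst z * fst z + snd z * snd z).
Definition Cscale (r : R) (z : Cx) : Cx := (r * fst z, r * snd z).

Definition Cdifferentiable (f : Cx -> Cx) (z : Cx) : Prop :=
  exists l : Cx, forall eps, 0 < eps -> exists delta, 0 < delta /\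
    forall w, w <> z -> Cmod (Csub w z) < delta ->
      Cmod (Csub (Cdiv (Csub (f w) (f z)) (Csub w z)) l) < eps.

Definition Copen (D : Cx -> Prop) : Prop :=
  forall z, D z -> exists r, 0 < r /\ forall w, Cmod (Csub w z) < r -> D w.

Definition Cdomain (D : Cx -> Prop) : Prop :=
  Copen D /\ (exists z, D z) /\
  forall U V : Cx -> Prop, Copen U -> Copen V ->
    (forall z, D z -> U z \/ V z) ->
    (forall z, D z -> U z -> V z -> False) ->
    (exists z, D z /\ U z) -> (exists z, D z /\ V z) -> False.

Definition pole (f : Cx -> Cx) (p : Cx) : Prop :=
  forall M : R, exists delta, 0 < delta /\
    forall w, w <> p -> Cmod (Csub w p) < delta -> M < Cmod (f w).

(* f is meromorphic on D: at each point of D it is either complex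
   differentiable or has a pole, and the poles are isolated in D.
   (The value of f at a pole is irrelevant.) *)
Definition meromorphic (D : Cx -> Prop) (f : Cx -> Cx) : Prop :=
  (forall z, D z -> Cdifferentiable f z \/ pole f z) /\
  (forall z, D z -> exists r, 0 < r /\
     forall w, w <> z -> Cmod (Csub w z) < r -> ~ pole f w).

(* phase of h at z (meaningful where h z is finite and nonzero) *)
Definition phase (h : Cx -> Cx) (z : Cx) : Cx := Cscale (/ Cmod (h z)) (h z).

Definition same_phase (D : Cx -> Prop) (h1 h2 : Cx -> Cx) : Prop :=
  forall z, D z -> ~ pole h1 z -> ~ pole h2 z -> h1 z <> C0 -> h2 z <> C0 ->
    phase h1 z = phase h2 z.

Definition nonconstant_on (D : Cx -> Prop) (f : Cx -> Cx) : Prop :=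
  ~ exists c : Cx, forall z, D z -> f z = c.

Definition mero_eq (D : Cx -> Prop) (f g : Cx -> Cx) : Prop :=
  forall z, D z -> (pole f z <-> pole g z) /\ (~ pole f z -> f z = g z).

Definition Cshift (h : Cx -> Cx) (c : Cx) : Cx -> Cx := fun z => Cadd (h z) c.

(* Main.v *)
Require Import Defs.
From Stdlib Require Import Reals Lra Lia Psatz Classical ClassicalEpsilon FunctionalExtensionality Arith.
Open Scope R_scope.


Definition Cone : Cx := (1, 0).
Definition Ci : Cx := (0, 1).
Definition RC (r : R) : Cx := (r, 0).

Lemma Cx_eq : forall z w : Cx, fst z = fst w -> snd z = snd w -> z = w.
Proof. intros [a b] [c d]; simpl; intros; subst; reflexivity. Qed.

Lemma Cring : ring_theory C0 Cone Cadd Cmul Csub Copp (@eq Cx).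
Proof.
  constructor; intros; apply Cx_eq; unfold Cadd, Cmul, Csub, Copp, C0, Cone; simpl; ring.
Qed.

Lemma Cone_neq_C0 : Cone <> C0.
Proof. intro H; injection H; lra. Qed.

Lemma Cnorm2_pos : forall z : Cx, z <> C0 -> 0 < fst z * fst z + snd z * snd z.
Proof.
  intros [a b] H; simpl.
  destruct (Req_dec a 0); destruct (Req_dec b 0); subst.
  - exfalso; apply H; reflexivity.
  - nra.
  - nra.
  - nra.
Qed.

Lemma Cfield : field_theory C0 Cone Cadd Cmul Csub Copp Cdiv Cinv (@eq Cx).
Proof.
  constructor.
  - exact Cring.
  - exact Cone_neq_C0.
  - reflexivity.
  - intros p Hp. pose proof (Cnorm2_pos p Hp) as Hd.
    destruct p as [a b]; simpl in *.
    apply Cx_eq; unfold Cmul, Cinv, Cone; simpl; field; lra.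
Qed.

Add Field Cfield_inst : Cfield.

Declare Scope C_scope.
Delimit Scope C_scope with C.
Infix "+" := Cadd : C_scope.
Infix "*" := Cmul : C_scope.
Infix "-" := Csub : C_scope.
Infix "/" := Cdiv : C_scope.
Notation "- x" := (Copp x) : C_scope.
Notation "/ x" := (Cinv x) : C_scope.

Lemma Cpair_eq : forall a b c d : R, (a, b) = (c, d) <-> a = c /\ b = d.
Proof. split; intros H; [injection H; auto | destruct H; subst; auto]. Qed.

Lemma Cmod_ge0 : forall z, 0 <= Cmod z.
Proof. intros; apply sqrt_pos. Qed.

Lemma Cmod_sq : forall z, Cmod z * Cmod z = fst z * fst z + snd z * snd z.
Proof. intros; unfold Cmod; apply sqrt_sqrt; nra. Qed.

Lemma sqrt_le_aux : forall x y, 0 <= y -> x <= y * y -> sqrt x <= y.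
Proof.
  intros x y Hy Hx. destruct (Rle_dec 0 x).
  - rewrite <- (sqrt_square y Hy). apply sqrt_le_1_alt; auto.
  - rewrite sqrt_neg_0; lra.
Qed.

Lemma Cmod_le_of_sq : forall z r, 0 <= r -> fst z * fst z + snd z * snd z <= r * r -> Cmod z <= r.
Proof. intros; apply sqrt_le_aux; auto. Qed.

Lemma sq_le_Cmod : forall z r, 0 <= r -> r <= Cmod z -> r * r <= fst z * fst z + snd z * snd z.
Proof. intros. rewrite <- Cmod_sq. pose proof (Cmod_ge0 z). nra. Qed.

Lemma Cmod_mul : forall z w, Cmod (Cmul z w) = Cmod z * Cmod w.
Proof.
  intros [a b] [c d]; unfold Cmod, Cmul; simpl.
  rewrite <- sqrt_mult by nra. f_equal; ring.
Qed.

Lemma Cmod_add : forall z w, Cmod (Cadd z w) <= Cmod z + Cmod w.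
Proof.
  intros z w. apply Cmod_le_of_sq.
  - pose proof (Cmod_ge0 z); pose proof (Cmod_ge0 w); lra.
  - pose proof (Cmod_sq z); pose proof (Cmod_sq w); pose proof (Cmod_ge0 z); pose proof (Cmod_ge0 w).
    destruct z as [a b]; destruct w as [c d]; unfold Cadd; simpl in *.
    assert (HCS : a * c + b * d <= Cmod (a, b) * Cmod (c, d)).
    { assert ((a*c+b*d)*(a*c+b*d) <= (Cmod (a,b) * Cmod (c,d)) * (Cmod (a,b) * Cmod (c,d))).
      { replace ((Cmod (a,b) * Cmod (c,d)) * (Cmod (a,b) * Cmod (c,d))) with
          ((Cmod (a,b) * Cmod (a,b)) * (Cmod (c,d) * Cmod (c,d))) by ring.
        rewrite H, H0. assert (E: (a*a+b*b)*(c*c+d*d) - (a*c+b*d)*(a*c+b*d) = (a*d-b*c)*(a*d-b*c)) by ring. pose proof (Rle_0_sqr (a*d-b*c)). unfold Rsqr in *. lra. }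
      assert (0 <= Cmod (a,b) * Cmod (c,d)) by nra. nra. }
    nra.
Qed.

Lemma Cmod_fst : forall z, Rabs (fst z) <= Cmod z.
Proof.
  intros z. pose proof (Cmod_sq z). pose proof (Cmod_ge0 z).
  rewrite <- (Rabs_pos_eq (Cmod z)) by auto. apply Rsqr_le_abs_0. unfold Rsqr. nra.
Qed.

Lemma Cmod_snd : forall z, Rabs (snd z) <= Cmod z.
Proof.
  intros z. pose proof (Cmod_sq z). pose proof (Cmod_ge0 z).
  rewrite <- (Rabs_pos_eq (Cmod z)) by auto. apply Rsqr_le_abs_0. unfold Rsqr. nra.
Qed.

Lemma Cmod_le_abs : forall z, Cmod z <= Rabs (fst z) + Rabs (snd z).
Proof.
  intros z. apply Cmod_le_of_sq.
  - pose proof (Rabs_pos (fst z)); pose proof (Rabs_pos (snd z)); lra.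
  - pose proof (Rabs_pos (fst z)); pose proof (Rabs_pos (snd z)).
    pose proof (Rsqr_abs (fst z)); pose proof (Rsqr_abs (snd z)); unfold Rsqr in *. nra.
Qed.

Lemma Cmod_C0 : Cmod C0 = 0.
Proof. unfold Cmod, C0; simpl. replace (0*0+0*0) with 0 by ring. apply sqrt_0. Qed.

Lemma Cmod_eq0 : forall z, Cmod z = 0 -> z = C0.
Proof.
  intros z H. pose proof (Cmod_sq z). rewrite H in H0.
  destruct z as [a b]; simpl in *. unfold C0. apply Cpair_eq; nra.
Qed.

Lemma Cmod_pos : forall z, z <> C0 -> 0 < Cmod z.
Proof.
  intros z H. pose proof (Cmod_ge0 z). destruct (Req_dec (Cmod z) 0).
  - exfalso; apply H, Cmod_eq0; auto.
  - lra.
Qed.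

Lemma Cmod_Cone : Cmod Cone = 1.
Proof. unfold Cmod, Cone; simpl. replace (1*1+0*0) with 1 by ring. apply sqrt_1. Qed.

Lemma Cmod_inv : forall z, z <> C0 -> Cmod (Cinv z) = / Cmod z.
Proof.
  intros z H. pose proof (Cmod_pos z H).
  assert (Cmod (Cinv z) * Cmod z = 1).
  { rewrite <- Cmod_mul. replace (Cmul (Cinv z) z) with Cone by (field; auto). apply Cmod_Cone. }
  field_simplify_eq; lra.
Qed.

Lemma Cmod_opp : forall z, Cmod (Copp z) = Cmod z.
Proof. intros [a b]; unfold Cmod, Copp; simpl; f_equal; ring. Qed.

Lemma Cmod_sub_sym : forall z w, Cmod (Csub z w) = Cmod (Csub w z).
Proof. intros. replace (Csub z w) with (Copp (Csub w z)) by ring. apply Cmod_opp. Qed.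

Lemma Cmod_sub : forall z w, Cmod (Csub z w) <= Cmod z + Cmod w.
Proof. intros. unfold Csub. rewrite <- (Cmod_opp w). apply Cmod_add. Qed.

Lemma Cmod_sub_ge : forall z w, Cmod z - Cmod w <= Cmod (Csub z w).
Proof.
  intros. pose proof (Cmod_add (Csub z w) w). replace (Cadd (Csub z w) w) with z in H by ring. lra.
Qed.

Lemma Cmod_RC : forall r, Cmod (RC r) = Rabs r.
Proof. intros; unfold Cmod, RC; simpl. replace (r*r+0*0) with (Rsqr r) by (unfold Rsqr; ring). apply sqrt_Rsqr_abs. Qed.

Lemma Cmod_Ci : Cmod Ci = 1.
Proof. unfold Cmod, Ci; simpl. replace (0*0+1*1) with 1 by ring. apply sqrt_1. Qed.

Lemma Cmod_tri3 : forall a b c, Cmod (Csub a c) <= Cmod (Csub a b) + Cmod (Csub b c).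
Proof. intros. replace (Csub a c) with (Cadd (Csub a b) (Csub b c)) by ring. apply Cmod_add. Qed.

Fixpoint Cpow (z : Cx) (n : nat) : Cx := match n with O => Cone | S m => Cmul z (Cpow z m) end.

Lemma Cmod_pow : forall z n, Cmod (Cpow z n) = Cmod z ^ n.
Proof. induction n; simpl. apply Cmod_Cone. rewrite Cmod_mul, IHn; auto. Qed.

Lemma Cpow_neq0 : forall z n, z <> C0 -> Cpow z n <> C0.
Proof. intros z n H. induction n; simpl. apply Cone_neq_C0.
  intro E. apply (f_equal Cmod) in E. rewrite Cmod_mul, Cmod_C0 in E.
  pose proof (Cmod_pos _ H). pose proof (Cmod_pos _ IHn). nra. Qed.

Lemma Cx_dec : forall z w : Cx, {z = w} + {z <> w}.
Proof. intros. apply excluded_middle_informative. Qed.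


Definition Ccont (f : Cx -> Cx) (z : Cx) : Prop :=
  forall eps, 0 < eps -> exists delta, 0 < delta /\
    forall w, Cmod (Csub w z) < delta -> Cmod (Csub (f w) (f z)) < eps.

Lemma Ccont_const : forall k z, Ccont (fun _ => k) z.
Proof. intros k z e He. exists 1; split; [lra|]. intros. replace (Csub k k) with C0 by ring. rewrite Cmod_C0; lra. Qed.

Lemma Ccont_id : forall z, Ccont (fun w => w) z.
Proof. intros z e He. exists e; split; auto. Qed.

Lemma Ccont_add : forall f g z, Ccont f z -> Ccont g z -> Ccont (fun w => Cadd (f w) (g w)) z.
Proof.
  intros f g z Hf Hg e He.
  destruct (Hf (e/2)) as [d1 [Hd1 H1]]; [lra|]. destruct (Hg (e/2)) as [d2 [Hd2 H2]]; [lra|].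
  exists (Rmin d1 d2); split; [apply Rmin_glb_lt; auto|]. intros w Hw.
  replace (Csub (Cadd (f w) (g w)) (Cadd (f z) (g z))) with (Cadd (Csub (f w) (f z)) (Csub (g w) (g z))) by ring.
  eapply Rle_lt_trans; [apply Cmod_add|].
  assert (Cmod (Csub w z) < d1) by (eapply Rlt_le_trans; [apply Hw| apply Rmin_l]).
  assert (Cmod (Csub w z) < d2) by (eapply Rlt_le_trans; [apply Hw| apply Rmin_r]).
  specialize (H1 w H). specialize (H2 w H0). lra.
Qed.

Lemma Ccont_opp : forall f z, Ccont f z -> Ccont (fun w => Copp (f w)) z.
Proof.
  intros f z Hf e He. destruct (Hf e He) as [d [Hd H]]. exists d; split; auto. intros w Hw.
  replace (Csub (Copp (f w)) (Copp (f z))) with (Copp (Csub (f w) (f z))) by ring.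
  rewrite Cmod_opp; auto.
Qed.

Lemma Ccont_sub : forall f g z, Ccont f z -> Ccont g z -> Ccont (fun w => Csub (f w) (g w)) z.
Proof. intros. unfold Csub. apply Ccont_add; auto. apply Ccont_opp; auto. Qed.

Lemma Ccont_bound : forall f z, Ccont f z -> exists delta, 0 < delta /\
   forall w, Cmod (Csub w z) < delta -> Cmod (f w) <= Cmod (f z) + 1.
Proof.
  intros f z Hf. destruct (Hf 1) as [d [Hd H]]; [lra|]. exists d; split; auto. intros w Hw.
  specialize (H w Hw). pose proof (Cmod_sub_ge (f w) (f z)). lra.
Qed.

Lemma Ccont_mul : forall f g z, Ccont f z -> Ccont g z -> Ccont (fun w => Cmul (f w) (g w)) z.
Proof.
  intros f g z Hf Hg e He.
  set (A := Cmod (f z) + 1). set (B := Cmod (g z) + 1).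
  assert (HA : 0 < A) by (pose proof (Cmod_ge0 (f z)); unfold A; lra).
  assert (HB : 0 < B) by (pose proof (Cmod_ge0 (g z)); unfold B; lra).
  destruct (Ccont_bound g z Hg) as [d0 [Hd0 H0]].
  destruct (Hf (e/(2*B))) as [d1 [Hd1 H1]]. { apply Rdiv_lt_0_compat; lra. }
  destruct (Hg (e/(2*A))) as [d2 [Hd2 H2]]. { apply Rdiv_lt_0_compat; lra. }
  exists (Rmin d0 (Rmin d1 d2)); split. { apply Rmin_glb_lt; auto. apply Rmin_glb_lt; auto. }
  intros w Hw.
  assert (Cmod (Csub w z) < d0) by (eapply Rlt_le_trans; [apply Hw| apply Rmin_l]).
  assert (Cmod (Csub w z) < d1) by (eapply Rlt_le_trans; [apply Hw| eapply Rle_trans; [apply Rmin_r|apply Rmin_l]]).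
  assert (Cmod (Csub w z) < d2) by (eapply Rlt_le_trans; [apply Hw| eapply Rle_trans; [apply Rmin_r|apply Rmin_r]]).
  specialize (H0 w H). specialize (H1 w H3). specialize (H2 w H4).
  replace (Csub (Cmul (f w) (g w)) (Cmul (f z) (g z))) with
     (Cadd (Cmul (Csub (f w) (f z)) (g w)) (Cmul (f z) (Csub (g w) (g z)))) by ring.
  eapply Rle_lt_trans; [apply Cmod_add|]. rewrite !Cmod_mul.
  pose proof (Cmod_ge0 (Csub (f w) (f z))). pose proof (Cmod_ge0 (g w)). pose proof (Cmod_ge0 (f z)).
  pose proof (Cmod_ge0 (Csub (g w) (g z))).
  assert (Cmod (Csub (f w) (f z)) * Cmod (g w) <= e/(2*B) * B).
  { apply Rmult_le_compat; auto; lra. }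
  assert (Cmod (f z) * Cmod (Csub (g w) (g z)) < A * (e/(2*A))).
  { apply Rle_lt_trans with (A * Cmod (Csub (g w) (g z))).
    - apply Rmult_le_compat_r; auto. unfold A; lra.
    - apply Rmult_lt_compat_l; auto. }
  assert (e/(2*B)*B = e/2) by (field; lra). assert (A*(e/(2*A)) = e/2) by (field; lra). lra.
Qed.

Lemma Ccont_inv : forall f z, Ccont f z -> f z <> C0 -> Ccont (fun w => Cinv (f w)) z.
Proof.
  intros f z Hf Hz e He.
  set (m := Cmod (f z)). assert (Hm : 0 < m) by (apply Cmod_pos; auto).
  destruct (Hf (m/2)) as [d1 [Hd1 H1]]; [lra|].
  destruct (Hf (e * m * m / 2)) as [d2 [Hd2 H2]]. { apply Rdiv_lt_0_compat; [|lra]. repeat apply Rmult_lt_0_compat; auto. }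
  exists (Rmin d1 d2); split; [apply Rmin_glb_lt; auto|]. intros w Hw.
  assert (Cmod (Csub w z) < d1) by (eapply Rlt_le_trans; [apply Hw| apply Rmin_l]).
  assert (Cmod (Csub w z) < d2) by (eapply Rlt_le_trans; [apply Hw| apply Rmin_r]).
  specialize (H1 w H). specialize (H2 w H0).
  assert (Hfw : m/2 <= Cmod (f w)). { pose proof (Cmod_sub_ge (f z) (f w)). rewrite Cmod_sub_sym in H1. fold m in H3. lra. }
  assert (Hfw0 : f w <> C0). { intro E. rewrite E, Cmod_C0 in Hfw. lra. }
  replace (Csub (Cinv (f w)) (Cinv (f z))) with (Cmul (Csub (f z) (f w)) (Cinv (Cmul (f w) (f z)))) by (field; auto).
  rewrite Cmod_mul, Cmod_inv, Cmod_mul. 2:{ intro E. apply (f_equal Cmod) in E. rewrite Cmod_mul, Cmod_C0 in E. fold m in E. nra. }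
  fold m. rewrite Cmod_sub_sym.
  apply Rle_lt_trans with (Cmod (Csub (f w) (f z)) * / (m/2 * m)).
  - apply Rmult_le_compat_l; [apply Cmod_ge0|]. apply Rinv_le_contravar. nra. nra.
  - replace (Cmod (Csub (f w) (f z)) * / (m / 2 * m)) with (Cmod (Csub (f w) (f z)) * 2 / (m*m)) by (field; lra).
    apply Rlt_le_trans with ((e*m*m/2) * 2 / (m*m)).
    + unfold Rdiv. apply Rmult_lt_compat_r. apply Rinv_0_lt_compat; nra. lra.
    + right; field; lra.
Qed.

Lemma Ccont_pow : forall f z n, Ccont f z -> Ccont (fun w => Cpow (f w) n) z.
Proof. intros f z n H. induction n; simpl. apply Ccont_const. apply Ccont_mul; auto. Qed.

Lemma Ccont_comp : forall f g z, Ccont g z -> Ccont f (g z) -> Ccont (fun w => f (g w)) z.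
Proof.
  intros f g z Hg Hf e He. destruct (Hf e He) as [d1 [Hd1 H1]]. destruct (Hg d1 Hd1) as [d2 [Hd2 H2]].
  exists d2; split; auto.
Qed.

Definition Carath (f : Cx -> Cx) (z : Cx) : Prop :=
  exists phi r, 0 < r /\ Ccont phi z /\
    forall w, Cmod (Csub w z) < r -> Csub (f w) (f z) = Cmul (phi w) (Csub w z).

Lemma Cdiff_carath : forall f z, Cdifferentiable f z -> Carath f z.
Proof.
  intros f z [l Hl].
  exists (fun w => if Cx_dec w z then l else Cdiv (Csub (f w) (f z)) (Csub w z)), 1.
  split; [lra|]. split.
  - intros e He. destruct (Hl e He) as [d [Hd H]]. exists d; split; auto. intros w Hw.
    destruct (Cx_dec z z) as [_|C]; [|congruence].
    destruct (Cx_dec w z) as [E|N].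
    + subst. replace (Csub l l) with C0 by ring. rewrite Cmod_C0; auto.
    + apply H; auto.
  - intros w _. destruct (Cx_dec w z) as [E|N].
    + subst. ring.
    + field. intro E. apply N. replace w with (Cadd (Csub w z) z) by ring. rewrite E. ring.
Qed.

Lemma Csub_neq0 : forall w z, w <> z -> Csub w z <> C0.
Proof. intros w z N E. apply N. replace w with (Cadd (Csub w z) z) by ring. rewrite E. ring. Qed.

Lemma carath_Cdiff : forall f z, Carath f z -> Cdifferentiable f z.
Proof.
  intros f z [phi [r [Hr [Hc Hid]]]]. exists (phi z). intros e He.
  destruct (Hc e He) as [d [Hd H]]. exists (Rmin d r); split; [apply Rmin_glb_lt; auto|].
  intros w Hwz Hw.
  assert (Cmod (Csub w z) < d) by (eapply Rlt_le_trans; [apply Hw| apply Rmin_l]).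
  assert (Cmod (Csub w z) < r) by (eapply Rlt_le_trans; [apply Hw| apply Rmin_r]).
  rewrite Hid by auto. replace (Cdiv (Cmul (phi w) (Csub w z)) (Csub w z)) with (phi w).
  - apply H; auto.
  - field. apply Csub_neq0; auto.
Qed.

Lemma carath_cont : forall f z, Carath f z -> Ccont f z.
Proof.
  intros f z [phi [r [Hr [Hc Hid]]]] e He.
  destruct (Ccont_bound phi z Hc) as [d [Hd H]].
  set (B := Cmod (phi z) + 1). assert (HB : 0 < B) by (pose proof (Cmod_ge0 (phi z)); unfold B; lra).
  exists (Rmin (Rmin d r) (e / B)); split.
  { apply Rmin_glb_lt; [apply Rmin_glb_lt|apply Rdiv_lt_0_compat]; auto. }
  intros w Hw.
  assert (Cmod (Csub w z) < d) by (eapply Rlt_le_trans; [apply Hw| eapply Rle_trans; [apply Rmin_l|apply Rmin_l]]).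
  assert (Cmod (Csub w z) < r) by (eapply Rlt_le_trans; [apply Hw| eapply Rle_trans; [apply Rmin_l|apply Rmin_r]]).
  assert (Cmod (Csub w z) < e / B) by (eapply Rlt_le_trans; [apply Hw| apply Rmin_r]).
  rewrite Hid by auto. rewrite Cmod_mul. specialize (H w H0).
  apply Rle_lt_trans with (B * Cmod (Csub w z)).
  - apply Rmult_le_compat_r; [apply Cmod_ge0|]. unfold B; lra.
  - replace e with (B * (e / B)) by (field; lra). apply Rmult_lt_compat_l; auto.
Qed.

Lemma Cdiff_cont : forall f z, Cdifferentiable f z -> Ccont f z.
Proof. intros. apply carath_cont, Cdiff_carath; auto. Qed.

Lemma Cdiff_local : forall f g z r, 0 < r -> (forall w, Cmod (Csub w z) < r -> g w = f w) ->
  Cdifferentiable f z -> Cdifferentiable g z.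
Proof.
  intros f g z r Hr Heq [l Hl]. exists l. intros e He. destruct (Hl e He) as [d [Hd H]].
  exists (Rmin d r); split; [apply Rmin_glb_lt; auto|]. intros w Hwz Hw.
  assert (Cmod (Csub w z) < d) by (eapply Rlt_le_trans; [apply Hw| apply Rmin_l]).
  assert (Cmod (Csub w z) < r) by (eapply Rlt_le_trans; [apply Hw| apply Rmin_r]).
  rewrite Heq by auto. rewrite (Heq z) by (replace (Csub z z) with C0 by ring; rewrite Cmod_C0; auto).
  apply H; auto.
Qed.

Lemma Cdiff_const : forall k z, Cdifferentiable (fun _ => k) z.
Proof.
  intros. apply carath_Cdiff. exists (fun _ => C0), 1. split; [lra|]. split. apply Ccont_const.
  intros; ring.
Qed.

Lemma Cdiff_id : forall z, Cdifferentiable (fun w => w) z.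
Proof.
  intros. apply carath_Cdiff. exists (fun _ => Cone), 1. split; [lra|]. split. apply Ccont_const.
  intros; ring.
Qed.

Lemma Rmin3 : forall a b, 0 < a -> 0 < b -> 0 < Rmin a b.
Proof. intros; apply Rmin_glb_lt; auto. Qed.

Lemma lt_min_l : forall x a b, x < Rmin a b -> x < a.
Proof. intros. eapply Rlt_le_trans; [apply H|apply Rmin_l]. Qed.
Lemma lt_min_r : forall x a b, x < Rmin a b -> x < b.
Proof. intros. eapply Rlt_le_trans; [apply H|apply Rmin_r]. Qed.

Lemma Cdiff_add : forall f g z, Cdifferentiable f z -> Cdifferentiable g z ->
  Cdifferentiable (fun w => Cadd (f w) (g w)) z.
Proof.
  intros f g z Hf Hg. apply Cdiff_carath in Hf as [p1 [r1 [Hr1 [Hc1 H1]]]].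
  apply Cdiff_carath in Hg as [p2 [r2 [Hr2 [Hc2 H2]]]].
  apply carath_Cdiff. exists (fun w => Cadd (p1 w) (p2 w)), (Rmin r1 r2). split; [apply Rmin3; auto|]. split.
  - apply Ccont_add; auto.
  - intros w Hw. specialize (H1 w (lt_min_l _ _ _ Hw)). specialize (H2 w (lt_min_r _ _ _ Hw)).
    replace (Csub (Cadd (f w) (g w)) (Cadd (f z) (g z))) with (Cadd (Csub (f w) (f z)) (Csub (g w) (g z))) by ring.
    rewrite H1, H2. ring.
Qed.

Lemma Cdiff_sub : forall f g z, Cdifferentiable f z -> Cdifferentiable g z ->
  Cdifferentiable (fun w => Csub (f w) (g w)) z.
Proof.
  intros f g z Hf Hg. apply Cdiff_carath in Hf as [p1 [r1 [Hr1 [Hc1 H1]]]].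
  apply Cdiff_carath in Hg as [p2 [r2 [Hr2 [Hc2 H2]]]].
  apply carath_Cdiff. exists (fun w => Csub (p1 w) (p2 w)), (Rmin r1 r2). split; [apply Rmin3; auto|]. split.
  - apply Ccont_sub; auto.
  - intros w Hw. specialize (H1 w (lt_min_l _ _ _ Hw)). specialize (H2 w (lt_min_r _ _ _ Hw)).
    replace (Csub (Csub (f w) (g w)) (Csub (f z) (g z))) with (Csub (Csub (f w) (f z)) (Csub (g w) (g z))) by ring.
    rewrite H1, H2. ring.
Qed.

Lemma Cdiff_mul : forall f g z, Cdifferentiable f z -> Cdifferentiable g z ->
  Cdifferentiable (fun w => Cmul (f w) (g w)) z.
Proof.
  intros f g z Hf Hg. pose proof (Cdiff_cont _ _ Hf) as Cf.
  apply Cdiff_carath in Hf as [p1 [r1 [Hr1 [Hc1 H1]]]].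
  apply Cdiff_carath in Hg as [p2 [r2 [Hr2 [Hc2 H2]]]].
  apply carath_Cdiff. exists (fun w => Cadd (Cmul (f w) (p2 w)) (Cmul (p1 w) (g z))), (Rmin r1 r2).
  split; [apply Rmin3; auto|]. split.
  - apply Ccont_add; apply Ccont_mul; auto. apply Ccont_const.
  - intros w Hw. specialize (H1 w (lt_min_l _ _ _ Hw)). specialize (H2 w (lt_min_r _ _ _ Hw)).
    replace (Csub (Cmul (f w) (g w)) (Cmul (f z) (g z))) with
      (Cadd (Cmul (f w) (Csub (g w) (g z))) (Cmul (Csub (f w) (f z)) (g z))) by ring.
    rewrite H1, H2. ring.
Qed.

Lemma Cdiff_inv : forall f z, Cdifferentiable f z -> f z <> C0 ->
  Cdifferentiable (fun w => Cinv (f w)) z.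
Proof.
  intros f z Hf Hz. pose proof (Cdiff_cont _ _ Hf) as Cf.
  apply Cdiff_carath in Hf as [p1 [r1 [Hr1 [Hc1 H1]]]].
  set (m := Cmod (f z)). assert (Hm : 0 < m) by (apply Cmod_pos; auto).
  destruct (Cf m Hm) as [d [Hd Hfd]].
  apply carath_Cdiff. exists (fun w => Cmul (Copp (p1 w)) (Cinv (Cmul (f w) (f z)))), (Rmin r1 d).
  split; [apply Rmin3; auto|]. split.
  - apply Ccont_mul. apply Ccont_opp; auto. apply Ccont_inv. apply Ccont_mul; auto. apply Ccont_const.
    intro E. apply (f_equal Cmod) in E. rewrite Cmod_mul, Cmod_C0 in E. fold m in E. nra.
  - intros w Hw. specialize (H1 w (lt_min_l _ _ _ Hw)). specialize (Hfd w (lt_min_r _ _ _ Hw)).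
    assert (f w <> C0). { intro E. rewrite E in Hfd. replace (Csub C0 (f z)) with (Copp (f z)) in Hfd by ring.
      rewrite Cmod_opp in Hfd. fold m in Hfd. lra. }
    transitivity (Cmul (Copp (Cmul (p1 w) (Csub w z))) (Cinv (Cmul (f w) (f z)))).
    + rewrite <- H1. field. auto.
    + field. split; auto.
Qed.


Definition RInt (f : R -> R) (a b : R) : R :=
  match excluded_middle_informative (inhabited (Riemann_integrable f a b)) with
  | left H => RiemannInt (epsilon H (fun _ => True))
  | right _ => 0
  end.

Lemma RInt_eq : forall f a b (pr : Riemann_integrable f a b), RInt f a b = RiemannInt pr.
Proof.
  intros. unfold RInt. destruct (excluded_middle_informative _) as [H|H].
  - apply RiemannInt_P5.
  - exfalso; apply H; constructor; auto.
Qed.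

Lemma RInt_lin : forall f g a b l, Riemann_integrable f a b -> Riemann_integrable g a b ->
  RInt (fun x => f x + l * g x) a b = RInt f a b + l * RInt g a b.
Proof.
  intros f g a b l p1 p2. rewrite (RInt_eq _ _ _ (RiemannInt_P10 l p1 p2)), (RInt_eq _ _ _ p1), (RInt_eq _ _ _ p2).
  apply RiemannInt_P13.
Qed.

Lemma Rint_add : forall f g a b, Riemann_integrable f a b -> Riemann_integrable g a b ->
  Riemann_integrable (fun x => f x + g x) a b.
Proof.
  intros. apply Riemann_integrable_ext with (fun x => f x + 1 * g x). intros; ring.
  apply RiemannInt_P10; auto.
Qed.

Lemma Rint_scal : forall f a b l, Riemann_integrable f a b -> Riemann_integrable (fun x => l * f x) a b.
Proof. intros. apply Riemann_integrable_scal; auto. Qed.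

Lemma Rint_const : forall a b c, Riemann_integrable (fun _ => c) a b.
Proof. intros. apply (RiemannInt_P14 a b c). Qed.

Lemma RInt_add : forall f g a b, Riemann_integrable f a b -> Riemann_integrable g a b ->
  RInt (fun x => f x + g x) a b = RInt f a b + RInt g a b.
Proof.
  intros. replace (fun x => f x + g x) with (fun x => f x + 1 * g x).
  rewrite RInt_lin; auto; ring. apply functional_extensionality; intros; ring.
Qed.

Lemma RInt_const : forall a b c, RInt (fun _ => c) a b = c * (b - a).
Proof. intros. change (fun _ : R => c) with (fct_cte c). rewrite (RInt_eq _ _ _ (RiemannInt_P14 a b c)). apply RiemannInt_P15. Qed.

Lemma RInt_scal : forall f a b l, Riemann_integrable f a b ->
  RInt (fun x => l * f x) a b = l * RInt f a b.
Proof.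
  intros. replace (fun x => l * f x) with (fun x => (fun _ => 0) x + l * f x).
  rewrite RInt_lin; auto. rewrite RInt_const; ring. apply Rint_const.
  apply functional_extensionality; intros; ring.
Qed.

Lemma RInt_chasles : forall f a m b, a <= m <= b -> Riemann_integrable f a b ->
  RInt f a m + RInt f m b = RInt f a b.
Proof.
  intros f a m b Hm p. pose proof (RiemannInt_P22 p Hm) as p1. pose proof (RiemannInt_P23 p Hm) as p2.
  rewrite (RInt_eq _ _ _ p1), (RInt_eq _ _ _ p2), (RInt_eq _ _ _ p). apply RiemannInt_P26.
Qed.

Lemma RInt_le : forall f g a b, a <= b -> Riemann_integrable f a b -> Riemann_integrable g a b ->
  (forall x, a <= x <= b -> f x <= g x) -> RInt f a b <= RInt g a b.
Proof.
  intros f g a b Hab p1 p2 H. rewrite (RInt_eq _ _ _ p1), (RInt_eq _ _ _ p2).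
  apply RiemannInt_P19; auto. intros; apply H; lra.
Qed.

Lemma RInt_ext : forall f g a b, a <= b -> Riemann_integrable f a b ->
  (forall x, a <= x <= b -> f x = g x) -> RInt f a b = RInt g a b.
Proof.
  intros f g a b Hab p H. assert (p2 : Riemann_integrable g a b).
  { apply Riemann_integrable_ext with f; auto. intros x Hx. apply H.
    rewrite Rmin_left, Rmax_right in Hx; auto. }
  rewrite (RInt_eq _ _ _ p), (RInt_eq _ _ _ p2). apply RiemannInt_P18; auto. intros; apply H; lra.
Qed.

Lemma RInt_point : forall f a, RInt f a a = 0.
Proof. intros. rewrite (RInt_eq _ _ _ (RiemannInt_P7 f a)). apply RiemannInt_P9. Qed.

Definition Ccont1 (h : R -> Cx) (t : R) : Prop :=
  forall eps, 0 < eps -> exists delta, 0 < delta /\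
    forall s, Rabs (s - t) < delta -> Cmod (Csub (h s) (h t)) < eps.

Lemma Ccont1_fst : forall h t, Ccont1 h t -> continuity_pt (fun s => fst (h s)) t.
Proof.
  intros h t H. intros e He. destruct (H e He) as [d [Hd Hs]]. exists d; split; auto.
  intros s [_ Hst]. unfold R_dist in *. simpl in *. unfold R_dist in *.
  eapply Rle_lt_trans; [|apply (Hs s Hst)]. pose proof (Cmod_fst (Csub (h s) (h t))).
  unfold Csub, Cadd, Copp in H0; simpl in H0. auto.
Qed.

Lemma Ccont1_snd : forall h t, Ccont1 h t -> continuity_pt (fun s => snd (h s)) t.
Proof.
  intros h t H. intros e He. destruct (H e He) as [d [Hd Hs]]. exists d; split; auto.
  intros s [_ Hst]. unfold R_dist in *. simpl in *. unfold R_dist in *.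
  eapply Rle_lt_trans; [|apply (Hs s Hst)]. pose proof (Cmod_snd (Csub (h s) (h t))).
  unfold Csub, Cadd, Copp in H0; simpl in H0. auto.
Qed.

Definition PCont (h : R -> Cx) (a b : R) : Prop := forall t, a <= t <= b -> Ccont1 h t.

Lemma PCont_int_fst : forall h a b, a <= b -> PCont h a b -> Riemann_integrable (fun s => fst (h s)) a b.
Proof. intros. apply continuity_implies_RiemannInt; auto. intros; apply Ccont1_fst; auto. Qed.
Lemma PCont_int_snd : forall h a b, a <= b -> PCont h a b -> Riemann_integrable (fun s => snd (h s)) a b.
Proof. intros. apply continuity_implies_RiemannInt; auto. intros; apply Ccont1_snd; auto. Qed.

Lemma Ccont_hor : forall g x y, Ccont g (x, y) -> Ccont1 (fun t => g (t, y)) x.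
Proof.
  intros g x y H e He. destruct (H e He) as [d [Hd Hs]]. exists d; split; auto.
  intros s Hsx. apply Hs. unfold Csub, Cadd, Copp; simpl.
  eapply Rle_lt_trans; [apply Cmod_le_abs|]. simpl. replace (y + - y) with 0 by ring. rewrite Rabs_R0.
  replace (s + - x) with (s - x) by ring. lra.
Qed.

Lemma Ccont_ver : forall g x y, Ccont g (x, y) -> Ccont1 (fun t => g (x, t)) y.
Proof.
  intros g x y H e He. destruct (H e He) as [d [Hd Hs]]. exists d; split; auto.
  intros s Hsx. apply Hs. unfold Csub, Cadd, Copp; simpl.
  eapply Rle_lt_trans; [apply Cmod_le_abs|]. simpl. replace (x + - x) with 0 by ring. rewrite Rabs_R0.
  replace (s + - y) with (s - y) by ring. lra.
Qed.

Definition CI (h : R -> Cx) (a b : R) : Cx :=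
  (RInt (fun s => fst (h s)) a b, RInt (fun s => snd (h s)) a b).

Section CIlemmas.
Variables (a b : R).
Hypothesis Hab : a <= b.

Lemma CI_add : forall h1 h2, PCont h1 a b -> PCont h2 a b ->
  CI (fun t => Cadd (h1 t) (h2 t)) a b = Cadd (CI h1 a b) (CI h2 a b).
Proof.
  intros. unfold CI, Cadd; simpl. apply Cx_eq; simpl.
  - apply RInt_add; apply PCont_int_fst; auto.
  - apply RInt_add; apply PCont_int_snd; auto.
Qed.

Lemma CI_scal : forall k h, PCont h a b -> CI (fun t => Cmul k (h t)) a b = Cmul k (CI h a b).
Proof.
  intros. pose proof (PCont_int_fst h a b Hab H). pose proof (PCont_int_snd h a b Hab H).
  unfold CI, Cmul; simpl. apply Cx_eq; simpl.
  - transitivity (RInt (fun s => (fun s => fst k * fst (h s)) s + (- snd k) * (fun s => snd (h s)) s) a b).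
    + f_equal. try (apply functional_extensionality; intros; simpl; ring).
    + rewrite RInt_lin, RInt_scal; auto. all: try ring. all: try (apply Rint_scal; auto).
  - transitivity (RInt (fun s => (fun s => fst k * snd (h s)) s + (snd k) * (fun s => fst (h s)) s) a b).
    + reflexivity.
    + rewrite RInt_lin, RInt_scal; auto. all: try ring. all: try (apply Rint_scal; auto).
Qed.

Lemma CI_const : forall k, CI (fun _ => k) a b = Cmul k (RC (b - a)).
Proof. intros. unfold CI, Cmul, RC; simpl. rewrite !RInt_const. apply Cx_eq; simpl; ring. Qed.

Lemma CI_opp : forall h, PCont h a b -> CI (fun t => Copp (h t)) a b = Copp (CI h a b).
Proof.
  intros. replace (fun t => Copp (h t)) with (fun t => Cmul (Copp Cone) (h t)).
  rewrite CI_scal; auto. ring. apply functional_extensionality; intros; ring.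
Qed.

Lemma PCont_add : forall h1 h2, PCont h1 a b -> PCont h2 a b -> PCont (fun t => Cadd (h1 t) (h2 t)) a b.
Proof.
  intros h1 h2 H1 H2 t Ht e He. destruct (H1 t Ht (e/2)) as [d1 [Hd1 P1]]; [lra|].
  destruct (H2 t Ht (e/2)) as [d2 [Hd2 P2]]; [lra|]. exists (Rmin d1 d2); split; [apply Rmin3; auto|].
  intros s Hs. specialize (P1 s (lt_min_l _ _ _ Hs)). specialize (P2 s (lt_min_r _ _ _ Hs)).
  replace (Csub (Cadd (h1 s) (h2 s)) (Cadd (h1 t) (h2 t))) with (Cadd (Csub (h1 s) (h1 t)) (Csub (h2 s) (h2 t))) by ring.
  eapply Rle_lt_trans; [apply Cmod_add|]. lra.
Qed.

Lemma PCont_scal : forall k h, PCont h a b -> PCont (fun t => Cmul k (h t)) a b.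
Proof.
  intros k h H t Ht e He. destruct (H t Ht (e / (Cmod k + 1))) as [d [Hd P]].
  { apply Rdiv_lt_0_compat; auto. pose proof (Cmod_ge0 k); lra. }
  exists d; split; auto. intros s Hs. specialize (P s Hs).
  replace (Csub (Cmul k (h s)) (Cmul k (h t))) with (Cmul k (Csub (h s) (h t))) by ring.
  rewrite Cmod_mul. pose proof (Cmod_ge0 k). pose proof (Cmod_ge0 (Csub (h s) (h t))).
  apply Rle_lt_trans with ((Cmod k + 1) * Cmod (Csub (h s) (h t))). nra.
  replace e with ((Cmod k + 1) * (e / (Cmod k + 1))) by (field; lra). apply Rmult_lt_compat_l; lra.
Qed.

Lemma CI_sub : forall h1 h2, PCont h1 a b -> PCont h2 a b ->
  CI (fun t => Csub (h1 t) (h2 t)) a b = Csub (CI h1 a b) (CI h2 a b).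
Proof.
  intros. unfold Csub. rewrite CI_add; auto. rewrite CI_opp; auto.
  replace (fun t => Copp (h2 t)) with (fun t => Cmul (Copp Cone) (h2 t)).
  apply PCont_scal; auto. apply functional_extensionality; intros; ring.
Qed.

Lemma CI_ext : forall h1 h2, PCont h1 a b -> (forall t, a <= t <= b -> h1 t = h2 t) ->
  CI h1 a b = CI h2 a b.
Proof.
  intros. unfold CI. apply Cx_eq; simpl; apply RInt_ext; auto.
  apply PCont_int_fst; auto. intros; rewrite H0; auto.
  apply PCont_int_snd; auto. intros; rewrite H0; auto.
Qed.

Lemma dot_le : forall z w : Cx, fst z * fst w + snd z * snd w <= Cmod z * Cmod w.
Proof.
  intros [p q] [r s]. simpl. pose proof (Cmod_sq (p,q)); pose proof (Cmod_sq (r,s)).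
  pose proof (Cmod_ge0 (p,q)); pose proof (Cmod_ge0 (r,s)). simpl in *.
  assert ((p*r+q*s)*(p*r+q*s) <= (Cmod (p,q) * Cmod (r,s)) * (Cmod (p,q) * Cmod (r,s))).
  { replace ((Cmod (p,q) * Cmod (r,s)) * (Cmod (p,q) * Cmod (r,s))) with
          ((Cmod (p,q) * Cmod (p,q)) * (Cmod (r,s) * Cmod (r,s))) by ring.
    rewrite H, H0. assert (E: (p*p+q*q)*(r*r+s*s) - (p*r+q*s)*(p*r+q*s) = (p*s-q*r)*(p*s-q*r)) by ring.
    pose proof (Rle_0_sqr (p*s-q*r)). unfold Rsqr in *. lra. }
  assert (0 <= Cmod (p,q) * Cmod (r,s)) by nra. nra.
Qed.

Lemma CI_bound : forall h M, PCont h a b -> (forall t, a <= t <= b -> Cmod (h t) <= M) ->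
  Cmod (CI h a b) <= M * (b - a).
Proof.
  intros h M Hc HM. set (I := CI h a b).
  pose proof (PCont_int_fst h a b Hab Hc) as p1. pose proof (PCont_int_snd h a b Hab Hc) as p2.
  assert (E : Cmod I * Cmod I = RInt (fun s => fst I * fst (h s) + snd I * snd (h s)) a b).
  { rewrite RInt_add by (apply Rint_scal; auto). rewrite !RInt_scal by auto. rewrite Cmod_sq. unfold I, CI; simpl. ring. }
  assert (L : RInt (fun s => fst I * fst (h s) + snd I * snd (h s)) a b <= RInt (fun _ => Cmod I * M) a b).
  { apply RInt_le; auto. apply Rint_add; apply Rint_scal; auto. apply Rint_const.
    intros x Hx. eapply Rle_trans; [apply (dot_le I (h x))|]. apply Rmult_le_compat_l. apply Cmod_ge0. auto. }
  rewrite RInt_const in L. pose proof (Cmod_ge0 I).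
  destruct (Req_dec (Cmod I) 0). rewrite H0. assert (0 <= M). { pose proof (HM a). pose proof (Cmod_ge0 (h a)). assert (a <= a <= b) by lra. specialize (H1 H3). lra. } nra.
  assert (Cmod I * Cmod I <= Cmod I * (M * (b - a))) by nra.
  apply Rmult_le_reg_l with (Cmod I); lra.
Qed.

End CIlemmas.

Lemma CI_chasles : forall h a m b, a <= m <= b -> PCont h a b -> Cadd (CI h a m) (CI h m b) = CI h a b.
Proof.
  intros. unfold CI, Cadd; simpl. apply Cx_eq; simpl; apply RInt_chasles; auto.
  apply PCont_int_fst; auto; lra. apply PCont_int_snd; auto; lra.
Qed.

Lemma CI_point : forall h a, CI h a a = C0.
Proof. intros. unfold CI. rewrite !RInt_point. reflexivity. Qed.

Lemma PCont_sub_interval : forall h a b c d, a <= c -> d <= b -> PCont h a b -> PCont h c d.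
Proof. intros h a b c d H1 H2 H t Ht. apply H. lra. Qed.


Definition Hint (g : Cx -> Cx) (y a b : R) : Cx := CI (fun x => g (x, y)) a b.
Definition Vint (g : Cx -> Cx) (x c d : R) : Cx := CI (fun y => g (x, y)) c d.
Definition RI (g : Cx -> Cx) (a b c d : R) : Cx :=
  Csub (Cadd (Hint g c a b) (Cmul Ci (Vint g b c d))) (Cadd (Hint g d a b) (Cmul Ci (Vint g a c d))).

Definition ContRect (g : Cx -> Cx) a b c d : Prop :=
  forall x y, a <= x <= b -> c <= y <= d -> Ccont g (x, y).
Definition ContBd (g : Cx -> Cx) a b c d : Prop :=
  (forall x, a <= x <= b -> Ccont g (x, c) /\ Ccont g (x, d)) /\
  (forall y, c <= y <= d -> Ccont g (a, y) /\ Ccont g (b, y)).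
Definition OnBd a b c d (w : Cx) : Prop :=
  (a <= fst w <= b /\ (snd w = c \/ snd w = d)) \/ (c <= snd w <= d /\ (fst w = a \/ fst w = b)).

Lemma ContRect_Bd : forall g a b c d, a <= b -> c <= d -> ContRect g a b c d -> ContBd g a b c d.
Proof. intros g a b c d H1 H2 H. split; intros; split; apply H; lra. Qed.

Lemma ContRect_sub : forall g a b c d a' b' c' d', a <= a' -> b' <= b -> c <= c' -> d' <= d ->
  ContRect g a b c d -> ContRect g a' b' c' d'.
Proof. intros. intros x y Hx Hy. apply H3; lra. Qed.

Section RIl.
Variables a b c d : R.
Hypothesis Hab : a <= b.
Hypothesis Hcd : c <= d.

Lemma Bd_bot : forall g, ContBd g a b c d -> PCont (fun x => g (x, c)) a b.
Proof. intros g [H _] t Ht. apply Ccont_hor, H; auto. Qed.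
Lemma Bd_top : forall g, ContBd g a b c d -> PCont (fun x => g (x, d)) a b.
Proof. intros g [H _] t Ht. apply Ccont_hor, H; auto. Qed.
Lemma Bd_left : forall g, ContBd g a b c d -> PCont (fun y => g (a, y)) c d.
Proof. intros g [_ H] t Ht. apply Ccont_ver, H; auto. Qed.
Lemma Bd_right : forall g, ContBd g a b c d -> PCont (fun y => g (b, y)) c d.
Proof. intros g [_ H] t Ht. apply Ccont_ver, H; auto. Qed.

Lemma RI_add : forall g1 g2, ContBd g1 a b c d -> ContBd g2 a b c d ->
  RI (fun w => Cadd (g1 w) (g2 w)) a b c d = Cadd (RI g1 a b c d) (RI g2 a b c d).
Proof.
  intros. unfold RI, Hint, Vint.
  rewrite !(CI_add a b) by (auto; first [apply Bd_bot | apply Bd_top]; auto).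
  rewrite !(CI_add c d) by (auto; first [apply Bd_left | apply Bd_right]; auto).
  ring.
Qed.

Lemma RI_scal : forall k g, ContBd g a b c d ->
  RI (fun w => Cmul k (g w)) a b c d = Cmul k (RI g a b c d).
Proof.
  intros. unfold RI, Hint, Vint.
  rewrite !(CI_scal a b) by (auto; first [apply Bd_bot | apply Bd_top]; auto).
  rewrite !(CI_scal c d) by (auto; first [apply Bd_left | apply Bd_right]; auto).
  ring.
Qed.

Lemma ContBd_add : forall g1 g2, ContBd g1 a b c d -> ContBd g2 a b c d -> ContBd (fun w => Cadd (g1 w) (g2 w)) a b c d.
Proof.
  intros g1 g2 [H1 H2] [H3 H4]. split; intros t Ht; split;
  (apply Ccont_add; [apply H1 || apply H2 | apply H3 || apply H4]; auto).
Qed.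

Lemma ContBd_scal : forall k g, ContBd g a b c d -> ContBd (fun w => Cmul k (g w)) a b c d.
Proof.
  intros k g [H1 H2]. split; intros t Ht; split; (apply Ccont_mul; [apply Ccont_const|]);
  first [apply H1 | apply H2]; auto.
Qed.

Lemma RI_sub : forall g1 g2, ContBd g1 a b c d -> ContBd g2 a b c d ->
  RI (fun w => Csub (g1 w) (g2 w)) a b c d = Csub (RI g1 a b c d) (RI g2 a b c d).
Proof.
  intros. replace (fun w => Csub (g1 w) (g2 w)) with (fun w => Cadd (g1 w) (Cmul (Copp Cone) (g2 w))).
  rewrite RI_add; auto. rewrite RI_scal; auto. ring. apply ContBd_scal; auto.
  apply functional_extensionality; intros; ring.
Qed.

Lemma RI_ext : forall g1 g2, ContBd g1 a b c d -> (forall w, OnBd a b c d w -> g1 w = g2 w) ->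
  RI g1 a b c d = RI g2 a b c d.
Proof.
  intros g1 g2 Hc H. unfold RI, Hint, Vint.
  rewrite (CI_ext a b Hab (fun x => g1 (x, c)) (fun x => g2 (x, c))), (CI_ext a b Hab (fun x => g1 (x, d)) (fun x => g2 (x, d))),
    (CI_ext c d Hcd (fun y => g1 (a, y)) (fun y => g2 (a, y))), (CI_ext c d Hcd (fun y => g1 (b, y)) (fun y => g2 (b, y))); auto.
  all: try (first [apply Bd_bot | apply Bd_top | apply Bd_left | apply Bd_right]; auto).
  all: intros t Ht; apply H; unfold OnBd; simpl; auto.
Qed.

Lemma RI_bound : forall g M, ContBd g a b c d -> (forall w, OnBd a b c d w -> Cmod (g w) <= M) ->
  Cmod (RI g a b c d) <= 2 * ((b - a) + (d - c)) * M.
Proof.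
  intros g M Hc H. unfold RI, Hint, Vint.
  assert (B1 : Cmod (CI (fun x => g (x, c)) a b) <= M * (b - a)).
  { apply CI_bound; auto. apply Bd_bot; auto. intros; apply H; unfold OnBd; simpl; auto. }
  assert (B2 : Cmod (CI (fun x => g (x, d)) a b) <= M * (b - a)).
  { apply CI_bound; auto. apply Bd_top; auto. intros; apply H; unfold OnBd; simpl; auto. }
  assert (B3 : Cmod (CI (fun y => g (a, y)) c d) <= M * (d - c)).
  { apply CI_bound; auto. apply Bd_left; auto. intros; apply H; unfold OnBd; simpl; auto. }
  assert (B4 : Cmod (CI (fun y => g (b, y)) c d) <= M * (d - c)).
  { apply CI_bound; auto. apply Bd_right; auto. intros; apply H; unfold OnBd; simpl; auto. }
  eapply Rle_trans; [apply Cmod_sub|]. eapply Rle_trans; [apply Rplus_le_compat; apply Cmod_add|].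
  rewrite !Cmod_mul, Cmod_Ci. lra.
Qed.

End RIl.

Lemma RI_split_x : forall g a m b c d, a <= m <= b -> c <= d -> ContBd g a b c d ->
  RI g a b c d = Cadd (RI g a m c d) (RI g m b c d).
Proof.
  intros. unfold RI, Hint, Vint.
  rewrite <- (CI_chasles (fun x => g (x, c)) a m b), <- (CI_chasles (fun x => g (x, d)) a m b); auto.
  ring. apply Bd_top with c; auto; lra. apply Bd_bot with d; auto; lra.
Qed.

Lemma RI_split_y : forall g a b c m d, a <= b -> c <= m <= d -> ContBd g a b c d ->
  RI g a b c d = Cadd (RI g a b c m) (RI g a b m d).
Proof.
  intros. unfold RI, Hint, Vint.
  rewrite <- (CI_chasles (fun y => g (b, y)) c m d), <- (CI_chasles (fun y => g (a, y)) c m d); auto.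
  ring. apply Bd_left with b; auto; lra. apply Bd_right with a; auto; lra.
Qed.

Lemma RI_degen_x : forall g a c d, RI g a a c d = C0.
Proof. intros. unfold RI, Hint, Vint. rewrite !CI_point. ring. Qed.

Lemma RI_degen_y : forall g a b c, RI g a b c c = C0.
Proof. intros. unfold RI, Hint, Vint. rewrite !CI_point. ring. Qed.

Lemma Ccont_affine : forall al be z, Ccont (fun w => Cadd al (Cmul be w)) z.
Proof. intros. apply Ccont_add. apply Ccont_const. apply Ccont_mul. apply Ccont_const. apply Ccont_id. Qed.

Lemma ContBd_of_all : forall g a b c d, (forall z, Ccont g z) -> ContBd g a b c d.
Proof. intros. split; intros; split; auto. Qed.

Lemma RI_affine : forall al be a b c d, a <= b -> c <= d -> RI (fun w => Cadd al (Cmul be w)) a b c d = C0.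
Proof.
  intros al be a b c d Hab Hcd.
  set (g := fun w => Cadd al (Cmul be w)).
  assert (Hc : forall z, Ccont g z) by (intros; apply Ccont_affine).
  assert (E : RI g a b c d = Cadd (CI (fun x => Csub (g (x, c)) (g (x, d))) a b)
                                   (Cmul Ci (CI (fun y => Csub (g (b, y)) (g (a, y))) c d))).
  { rewrite (CI_sub a b Hab), (CI_sub c d Hcd).
    - unfold RI, Hint, Vint. ring.
    - intros t _; apply Ccont_ver; auto.
    - intros t _; apply Ccont_ver; auto.
    - intros t _; apply Ccont_hor; auto.
    - intros t _; apply Ccont_hor; auto. }
  rewrite E.
  replace (fun x => Csub (g (x, c)) (g (x, d))) with (fun _ : R => Cmul be (0, c - d)).
  2:{ apply functional_extensionality; intros; unfold g; apply Cx_eq; unfold Csub, Cadd, Cmul, Copp; simpl; ring. }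
  replace (fun y => Csub (g (b, y)) (g (a, y))) with (fun _ : R => Cmul be (b - a, 0)).
  2:{ apply functional_extensionality; intros; unfold g; apply Cx_eq; unfold Csub, Cadd, Cmul, Copp; simpl; ring. }
  rewrite !CI_const. apply Cx_eq; unfold Cadd, Cmul, Ci, RC, C0; simpl; ring.
Qed.


Lemma nested_point : forall (an bn : nat -> R),
  (forall n, an n <= an (S n)) -> (forall n, bn (S n) <= bn n) -> (forall n, an n <= bn n) ->
  exists p, forall n, an n <= p <= bn n.
Proof.
  intros an bn Ha Hb Hab.
  assert (Ma : forall n k, an n <= an (k + n)%nat). { intros n k; induction k; simpl; lra || (specialize (Ha (k+n)%nat); lra). }
  assert (Mb : forall n k, bn (k + n)%nat <= bn n). { intros n k; induction k; simpl; lra || (specialize (Hb (k+n)%nat); lra). }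
  assert (Hall : forall m n, an m <= bn n).
  { intros m n. destruct (Nat.le_ge_cases m n) as [H|H].
    - replace n with ((n - m) + m)%nat by lia. specialize (Ma m (n-m)%nat). specialize (Hab ((n-m)+m)%nat). lra.
    - replace m with ((m - n) + n)%nat by lia. specialize (Mb n (m-n)%nat). specialize (Hab ((m-n)+n)%nat). lra. }
  set (E := fun x => exists n, x = an n).
  destruct (completeness E) as [p [Hp1 Hp2]].
  - exists (bn 0%nat). intros x [n ->]. apply Hall.
  - exists (an 0%nat), 0%nat; auto.
  - exists p. intros n. split.
    + apply Hp1. exists n; auto.
    + apply Hp2. intros x [m ->]. apply Hall.
Qed.

Record Rect := mkR { ra : R; rb : R; rc : R; rd : R }.
Definition RIq g q := RI g (ra q) (rb q) (rc q) (rd q).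
Definition mx q := (ra q + rb q) / 2.
Definition my q := (rc q + rd q) / 2.
Definition q1 q := mkR (ra q) (mx q) (rc q) (my q).
Definition q2 q := mkR (mx q) (rb q) (rc q) (my q).
Definition q3 q := mkR (ra q) (mx q) (my q) (rd q).
Definition q4 q := mkR (mx q) (rb q) (my q) (rd q).
Definition ContRq g q := ContRect g (ra q) (rb q) (rc q) (rd q).
Definition validq q := ra q <= rb q /\ rc q <= rd q.

Lemma RI_quarters : forall g q, validq q -> ContRq g q ->
  RIq g q = Cadd (Cadd (RIq g (q1 q)) (RIq g (q2 q))) (Cadd (RIq g (q3 q)) (RIq g (q4 q))).
Proof.
  intros g [a b c d] [H1 H2] Hc. unfold RIq, q1, q2, q3, q4, mx, my, ContRq in *; simpl in *.
  rewrite (RI_split_x g a ((a+b)/2) b c d); try lra. 2: apply ContRect_Bd; auto.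
  rewrite (RI_split_y g a ((a+b)/2) c ((c+d)/2) d); try lra.
  2: apply ContRect_Bd; try lra; eapply ContRect_sub; [| | | | apply Hc]; lra.
  rewrite (RI_split_y g ((a+b)/2) b c ((c+d)/2) d); try lra.
  2: apply ContRect_Bd; try lra; eapply ContRect_sub; [| | | | apply Hc]; lra.
  ring.
Qed.

Definition sel g q : Rect :=
  if Rle_dec (Cmod (RIq g q) / 4) (Cmod (RIq g (q1 q))) then q1 q else
  if Rle_dec (Cmod (RIq g q) / 4) (Cmod (RIq g (q2 q))) then q2 q else
  if Rle_dec (Cmod (RIq g q) / 4) (Cmod (RIq g (q3 q))) then q3 q else q4 q.

Lemma sel_big : forall g q, validq q -> ContRq g q -> Cmod (RIq g q) / 4 <= Cmod (RIq g (sel g q)).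
Proof.
  intros g q Hv Hc. unfold sel.
  destruct (Rle_dec _ _); auto. destruct (Rle_dec _ _); auto. destruct (Rle_dec _ _); auto.
  rewrite (RI_quarters g q Hv Hc) at 1.
  pose proof (Cmod_add (Cadd (RIq g (q1 q)) (RIq g (q2 q))) (Cadd (RIq g (q3 q)) (RIq g (q4 q)))).
  pose proof (Cmod_add (RIq g (q1 q)) (RIq g (q2 q))). pose proof (Cmod_add (RIq g (q3 q)) (RIq g (q4 q))).
  rewrite (RI_quarters g q Hv Hc) in n, n0, n1. lra.
Qed.

Lemma sel_geom : forall g q, validq q ->
  let q' := sel g q in
  ra q <= ra q' /\ rb q' <= rb q /\ rb q' - ra q' = (rb q - ra q) / 2 /\
  rc q <= rc q' /\ rd q' <= rd q /\ rd q' - rc q' = (rd q - rc q) / 2.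
Proof.
  intros g q [H1 H2]. unfold sel.
  destruct (Rle_dec _ _); [|destruct (Rle_dec _ _); [|destruct (Rle_dec _ _)]];
  unfold q1, q2, q3, q4, mx, my; simpl; lra.
Qed.

Theorem goursat : forall g a b c d, a <= b -> c <= d ->
  (forall x y, a <= x <= b -> c <= y <= d -> Cdifferentiable g (x, y)) -> RI g a b c d = C0.
Proof.
  intros g a b c d Hab Hcd Hdiff.
  destruct (Cx_dec (RI g a b c d) C0) as [E|NE]; auto. exfalso.
  set (q0 := mkR a b c d).
  set (Q := fun n => Nat.iter n (sel g) q0).
  assert (HC0 : ContRect g a b c d). { intros x y Hx Hy. apply Cdiff_cont; auto. }
  assert (Inv : forall n, a <= ra (Q n) /\ rb (Q n) <= b /\ rb (Q n) - ra (Q n) = (b - a) * (/2)^n /\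
                          c <= rc (Q n) /\ rd (Q n) <= d /\ rd (Q n) - rc (Q n) = (d - c) * (/2)^n).
  { induction n.
    - simpl. lra.
    - destruct IHn as [I1 [I2 [I3 [I4 [I5 I6]]]]].
      assert (validq (Q n)). { split; [pose proof (pow_le (/2) n) | pose proof (pow_le (/2) n)]; nra. }
      pose proof (sel_geom g (Q n) H) as G. simpl in G. change (Q (S n)) with (sel g (Q n)).
      simpl pow. destruct G as [G1 [G2 [G3 [G4 [G5 G6]]]]]. rewrite I3 in G3. rewrite I6 in G6.
      repeat split; try lra. }
  assert (Val : forall n, validq (Q n)).
  { intros n; destruct (Inv n) as [I1 [I2 [I3 [I4 [I5 I6]]]]]. pose proof (pow_le (/2) n). split; nra. }
  assert (Big : forall n, Cmod (RI g a b c d) * (/4)^n <= Cmod (RIq g (Q n))).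
  { induction n.
    - simpl. unfold RIq. simpl. lra.
    - change (Q (S n)) with (sel g (Q n)). simpl pow.
      eapply Rle_trans; [|apply sel_big; auto].
      + lra.
      + destruct (Inv n) as [I1 [I2 [I3 [I4 [I5 I6]]]]]. unfold ContRq. eapply ContRect_sub; [| | | | apply HC0]; lra. }
  destruct (nested_point (fun n => ra (Q n)) (fun n => rb (Q n))) as [px Hpx].
  { intros n. change (Q (S n)) with (sel g (Q n)). pose proof (sel_geom g (Q n) (Val n)). simpl in H. lra. }
  { intros n. change (Q (S n)) with (sel g (Q n)). pose proof (sel_geom g (Q n) (Val n)). simpl in H. lra. }
  { intros n; apply Val. }
  destruct (nested_point (fun n => rc (Q n)) (fun n => rd (Q n))) as [py Hpy].
  { intros n. change (Q (S n)) with (sel g (Q n)). pose proof (sel_geom g (Q n) (Val n)). simpl in H. lra. }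
  { intros n. change (Q (S n)) with (sel g (Q n)). pose proof (sel_geom g (Q n) (Val n)). simpl in H. lra. }
  { intros n; apply Val. }
  set (p := (px, py)).
  assert (Hp : a <= px <= b /\ c <= py <= d).
  { specialize (Hpx 0%nat); specialize (Hpy 0%nat). simpl in Hpx, Hpy. lra. }
  destruct (Cdiff_carath g p (Hdiff px py (proj1 Hp) (proj2 Hp))) as [phi [r [Hr [Hphic Hid]]]].
  set (eta := Cmod (RI g a b c d)). assert (Heta : 0 < eta) by (apply Cmod_pos; auto).
  set (D := (b - a) + (d - c)). assert (HD : 0 <= D) by (unfold D; lra).
  set (eps := eta / (4 * D * D + 1)). assert (Heps : 0 < eps) by (unfold eps; apply Rdiv_lt_0_compat; nra).
  destruct (Hphic eps Heps) as [del [Hdel Hphi]].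
  set (m := Rmin del r). assert (Hm : 0 < m) by (apply Rmin3; auto).
  destruct (pow_lt_1_zero (/2)) with (y := m / (D + 1)) as [N HN].
  { rewrite Rabs_pos_eq; lra. } { apply Rdiv_lt_0_compat; lra. }
  specialize (HN N (le_n N)). rewrite Rabs_pos_eq in HN by (apply pow_le; lra).
  set (h := (/2)^N). fold h in HN. assert (Hh : 0 < h) by (apply pow_lt; lra).
  assert (HDh : D * h < m). { apply Rle_lt_trans with ((D+1)*h). nra. replace m with ((D+1) * (m/(D+1))) by (field; lra). apply Rmult_lt_compat_l; lra. }
  destruct (Inv N) as [I1 [I2 [I3 [I4 [I5 I6]]]]]. fold h in I3, I6.
  specialize (Hpx N); specialize (Hpy N). simpl in Hpx, Hpy.
  set (qa := ra (Q N)) in *. set (qb := rb (Q N)) in *. set (qc := rc (Q N)) in *. set (qd := rd (Q N)) in *.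
  set (l := phi p).
  set (aff := fun w => Cadd (Csub (g p) (Cmul l p)) (Cmul l w)).
  assert (HCq : ContBd g qa qb qc qd). { apply ContRect_Bd; try lra. eapply ContRect_sub; [| | | | apply HC0]; lra. }
  assert (HCa : ContBd aff qa qb qc qd). { apply ContBd_of_all. intros; apply Ccont_affine. }
  assert (Eq1 : RIq g (Q N) = RI (fun w => Csub (g w) (aff w)) qa qb qc qd).
  { rewrite RI_sub by (auto; lra). unfold aff. rewrite RI_affine by lra. unfold RIq. fold qa qb qc qd. ring. }
  assert (Bnd : Cmod (RI (fun w => Csub (g w) (aff w)) qa qb qc qd) <= 2 * ((qb - qa) + (qd - qc)) * (eps * (D * h))).
  { apply RI_bound; try lra.
    - split; intros t Ht; split; apply Ccont_sub; try apply Ccont_affine; apply HC0; lra.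
    - intros w Hw.
      assert (Hwp : Cmod (Csub w p) <= D * h).
      { eapply Rle_trans; [apply Cmod_le_abs|]. unfold p, Csub, Cadd, Copp; simpl.
        destruct Hw as [[Hx [Hy|Hy]]|[Hy [Hx|Hx]]]; rewrite ?Hx, ?Hy;
        unfold D; rewrite Rmult_plus_distr_r, <- I3, <- I6;
        apply Rplus_le_compat; apply Rabs_le; lra. }
      assert (Cmod (Csub w p) < r) by (apply Rlt_le_trans with m; [lra|apply Rmin_r]).
      assert (Cmod (Csub w p) < del) by (apply Rlt_le_trans with m; [lra|apply Rmin_l]).
      replace (Csub (g w) (aff w)) with (Cmul (Csub (phi w) l) (Csub w p)).
      2:{ unfold aff. transitivity (Csub (Cadd (Csub (g w) (g p)) (g p)) (Cadd (Csub (g p) (Cmul l p)) (Cmul l w))).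
          2: f_equal; ring. rewrite Hid by auto. ring. }
      rewrite Cmod_mul. apply Rmult_le_compat; try apply Cmod_ge0; auto. left; apply Hphi; auto. }
  specialize (Big N). unfold RIq in Big, Eq1. fold qa qb qc qd in Big, Eq1. rewrite Eq1 in Big.
  fold eta in Big.
  assert (E4 : (/4)^N = h * h). { unfold h. rewrite <- Rpow_mult_distr. f_equal. field. }
  rewrite E4 in Big. rewrite I3, I6 in Bnd. fold D in Bnd.
  replace ((b - a) * h + (d - c) * h) with (D * h) in Bnd by (unfold D; ring).
  assert (eta * (h*h) <= (2 * D * D * eps) * (h*h)) by nra.
  assert (eta <= 2 * D * D * eps). { apply Rmult_le_reg_r with (h*h). nra. lra. }
  unfold eps in H0. assert (2 * D * D * (eta / (4 * D * D + 1)) < eta).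
  { replace (2 * D * D * (eta / (4 * D * D + 1))) with (eta * ((2 * D * D) / (4 * D * D + 1))) by (field; nra).
    assert ((2 * D * D) / (4 * D * D + 1) < 1). { apply Rmult_lt_reg_r with (4 * D * D + 1). nra. unfold Rdiv. rewrite Rmult_assoc, Rinv_l by nra. nra. }
    nra. }
  lra.
Qed.


Lemma zero_piece : forall g a b c d px py, a <= b -> c <= d ->
  (forall x y, a <= x <= b -> c <= y <= d -> (x, y) <> (px, py) -> Cdifferentiable g (x, y)) ->
  (a = b \/ px < a \/ b < px \/ c = d \/ py < c \/ d < py) -> RI g a b c d = C0.
Proof.
  intros g a b c d px py Hab Hcd Hd Hc.
  destruct Hc as [E|[E|[E|[E|[E|E]]]]].
  - subst; apply RI_degen_x.
  - apply goursat; auto. intros; apply Hd; auto. intro F; injection F; lra.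
  - apply goursat; auto. intros; apply Hd; auto. intro F; injection F; lra.
  - subst; apply RI_degen_y.
  - apply goursat; auto. intros; apply Hd; auto. intro F; injection F; lra.
  - apply goursat; auto. intros; apply Hd; auto. intro F; injection F; lra.
Qed.

Theorem goursat_exc : forall g a b c d p, a <= b -> c <= d -> ContRect g a b c d ->
  (forall x y, a <= x <= b -> c <= y <= d -> (x, y) <> p -> Cdifferentiable g (x, y)) ->
  RI g a b c d = C0.
Proof.
  intros g a b c d [px py] Hab Hcd Hc Hd.
  destruct (classic (a <= px <= b /\ c <= py <= d)) as [In|Out].
  2:{ apply goursat; auto. intros x y Hx Hy. apply Hd; auto. intro F; injection F; intros; subst; auto. }
  destruct In as [Hpx Hpy].
  destruct (Ccont_bound g (px, py) (Hc px py Hpx Hpy)) as [del [Hdel HB]].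
  set (K := Cmod (g (px, py)) + 1). assert (HK : 0 < K) by (pose proof (Cmod_ge0 (g (px,py))); unfold K; lra).
  assert (Key : forall t, 0 < t < del / 2 -> Cmod (RI g a b c d) <= 8 * t * K).
  { intros t Ht.
    set (x1 := Rmax a (px - t)). set (x2 := Rmin b (px + t)).
    set (y1 := Rmax c (py - t)). set (y2 := Rmin d (py + t)).
    assert (Hx1 : a <= x1 <= px) by (unfold x1; apply Rmax_case_strong; lra).
    assert (Hx2 : px <= x2 <= b) by (unfold x2; apply Rmin_case_strong; lra).
    assert (Hy1 : c <= y1 <= py) by (unfold y1; apply Rmax_case_strong; lra).
    assert (Hy2 : py <= y2 <= d) by (unfold y2; apply Rmin_case_strong; lra).
    assert (Ex1 : (x1 = a /\ px - t <= a) \/ (x1 = px - t /\ a <= px - t)) by (unfold x1; apply Rmax_case_strong; intros; [left|right]; split; auto; lra).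
    assert (Ex2 : (x2 = b /\ b <= px + t) \/ (x2 = px + t /\ px + t <= b)) by (unfold x2; apply Rmin_case_strong; intros; [left|right]; split; auto; lra).
    assert (Ey1 : (y1 = c /\ py - t <= c) \/ (y1 = py - t /\ c <= py - t)) by (unfold y1; apply Rmax_case_strong; intros; [left|right]; split; auto; lra).
    assert (Ey2 : (y2 = d /\ d <= py + t) \/ (y2 = py + t /\ py + t <= d)) by (unfold y2; apply Rmin_case_strong; intros; [left|right]; split; auto; lra).
    clearbody x1 x2 y1 y2.
    assert (HCB : forall a' b' c' d', a <= a' -> b' <= b -> c <= c' -> d' <= d -> a' <= b' -> c' <= d' -> ContBd g a' b' c' d').
    { intros. apply ContRect_Bd; auto. eapply ContRect_sub; [| | | | apply Hc]; lra. }
    assert (HDs : forall a' b' c' d', a <= a' -> b' <= b -> c <= c' -> d' <= d ->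
      forall x y, a' <= x <= b' -> c' <= y <= d' -> (x, y) <> (px, py) -> Cdifferentiable g (x, y)).
    { intros; apply Hd; auto; lra. }
    rewrite (RI_split_x g a x1 b c d) by (try lra; apply HCB; lra).
    rewrite (zero_piece g a x1 c d px py) by (try lra; try (apply HDs; lra); destruct Ex1; lra).
    rewrite (RI_split_x g x1 x2 b c d) by (try lra; apply HCB; lra).
    rewrite (zero_piece g x2 b c d px py) by (try lra; try (apply HDs; lra); destruct Ex2; lra).
    rewrite (RI_split_y g x1 x2 c y1 d) by (try lra; apply HCB; lra).
    rewrite (zero_piece g x1 x2 c y1 px py). 2,3: lra. 2: (apply HDs; lra). 2: (destruct Ey1; lra).
    rewrite (RI_split_y g x1 x2 y1 y2 d) by (try lra; apply HCB; lra).
    rewrite (zero_piece g x1 x2 y2 d px py). 2,3: lra. 2: (apply HDs; lra). 2: (destruct Ey2; lra).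
    match goal with |- Cmod ?X <= _ => replace X with (RI g x1 x2 y1 y2) by ring end.
    eapply Rle_trans. apply RI_bound; try lra. apply HCB; lra.
    { intros w Hw. apply HB. eapply Rle_lt_trans; [apply Cmod_le_abs|].
      destruct w as [wx wy]. unfold Csub, Cadd, Copp; simpl.
      assert (x1 <= wx <= x2 /\ y1 <= wy <= y2) by (unfold OnBd in Hw; simpl in Hw; lra).
      assert (px - t <= x1) by (destruct Ex1; lra). assert (x2 <= px + t) by (destruct Ex2; lra).
      assert (py - t <= y1) by (destruct Ey1; lra). assert (y2 <= py + t) by (destruct Ey2; lra).
      assert (Rabs (wx + - px) <= t) by (apply Rabs_le; lra).
      assert (Rabs (wy + - py) <= t) by (apply Rabs_le; lra). lra. }
    fold K.
    assert (x1 >= px - t) by (destruct Ex1; lra). assert (x2 <= px + t) by (destruct Ex2; lra).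
    assert (y1 >= py - t) by (destruct Ey1; lra). assert (y2 <= py + t) by (destruct Ey2; lra).
    apply Rmult_le_compat_r; lra. }
  destruct (Cx_dec (RI g a b c d) C0) as [E|NE]; auto. exfalso.
  set (eta := Cmod (RI g a b c d)). assert (He : 0 < eta) by (apply Cmod_pos; auto).
  set (t := Rmin (del / 4) (eta / (16 * K))).
  assert (Ht : 0 < t) by (apply Rmin3; [lra | apply Rdiv_lt_0_compat; lra]).
  assert (t <= eta / (16 * K)) by apply Rmin_r. assert (t <= del / 4) by apply Rmin_l.
  specialize (Key t ltac:(lra)). fold eta in Key.
  assert (8 * t * K <= eta / 2). { replace (eta / 2) with (8 * (eta / (16 * K)) * K) by (field; lra). nra. }
  lra.
Qed.

Lemma Ccont_local : forall f g z r, 0 < r -> (forall w, Cmod (Csub w z) < r -> g w = f w) ->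
  Ccont f z -> Ccont g z.
Proof.
  intros f g z r Hr Heq Hf e He. destruct (Hf e He) as [d [Hd H]].
  exists (Rmin d r); split; [apply Rmin3; auto|]. intros w Hw.
  rewrite Heq by (apply lt_min_r with d; auto).
  rewrite (Heq z) by (replace (Csub z z) with C0 by ring; rewrite Cmod_C0; auto).
  apply H. apply lt_min_l with r; auto.
Qed.

Definition Sq_in (z : Cx) (s : R) (w : Cx) : Prop :=
  Rabs (fst w - fst z) <= s /\ Rabs (snd w - snd z) <= s.

Theorem cauchy_square : forall h z s zeta, 0 < s ->
  (forall w, Sq_in z s w -> Cdifferentiable h w) ->
  Rabs (fst zeta - fst z) < s -> Rabs (snd zeta - snd z) < s ->
  RI (fun w => Cmul (h w) (Cinv (Csub w zeta))) (fst z - s) (fst z + s) (snd z - s) (snd z + s) =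
  Cmul (h zeta) (RI (fun w => Cinv (Csub w zeta)) (fst z - s) (fst z + s) (snd z - s) (snd z + s)).
Proof.
  intros h z s zeta Hs Hd Hz1 Hz2.
  set (a := fst z - s). set (b := fst z + s). set (c := snd z - s). set (d := snd z + s).
  assert (Hzin : Sq_in z s zeta) by (split; lra).
  destruct (Cdiff_carath h zeta (Hd zeta Hzin)) as [phi [r [Hr [Hphic Hid]]]].
  set (q := fun w => Cmul (Csub (h w) (h zeta)) (Cinv (Csub w zeta))).
  set (g := fun w => if Cx_dec w zeta then phi zeta else q w).
  assert (InSq : forall x y, a <= x <= b -> c <= y <= d -> Sq_in z s (x, y)).
  { intros x y Hx Hy. unfold Sq_in; simpl. split; apply Rabs_le; unfold a, b, c, d in *; lra. }
  assert (Gq : forall w0, w0 <> zeta -> forall w, Cmod (Csub w w0) < Cmod (Csub w0 zeta) -> g w = q w).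
  { intros w0 N w Hw. unfold g. destruct (Cx_dec w zeta) as [E|_]; auto. subst. rewrite Cmod_sub_sym in Hw. lra. }
  assert (Qd : forall w0, w0 <> zeta -> Sq_in z s w0 -> Cdifferentiable q w0).
  { intros w0 N Hin. unfold q. apply Cdiff_mul. apply Cdiff_sub. apply Hd; auto. apply Cdiff_const.
    apply Cdiff_inv. apply Cdiff_sub. apply Cdiff_id. apply Cdiff_const. apply Csub_neq0; auto. }
  assert (Gc : forall x y, a <= x <= b -> c <= y <= d -> Ccont g (x, y)).
  { intros x y Hx Hy. destruct (Cx_dec (x, y) zeta) as [E|N].
    - rewrite E. intros e He. destruct (Hphic e He) as [del [Hdel H]].
      exists (Rmin del r); split; [apply Rmin3; auto|]. intros w Hw.
      unfold g. destruct (Cx_dec zeta zeta) as [_|C]; [|congruence].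
      destruct (Cx_dec w zeta) as [E2|N2].
      + replace (Csub (phi zeta) (phi zeta)) with C0 by ring. rewrite Cmod_C0; auto.
      + unfold q. rewrite Hid by (apply lt_min_r with del; auto).
        replace (Cmul (Cmul (phi w) (Csub w zeta)) (Cinv (Csub w zeta))) with (phi w) by (field; apply Csub_neq0; auto).
        apply H. apply lt_min_l with r; auto.
    - apply Ccont_local with q (Cmod (Csub (x, y) zeta)). apply Cmod_pos, Csub_neq0; auto.
      apply Gq; auto. apply Cdiff_cont, Qd; auto. }
  assert (Hab : a <= b) by (unfold a, b; lra). assert (Hcd : c <= d) by (unfold c, d; lra).
  assert (G0 : RI g a b c d = C0).
  { apply goursat_exc with zeta; auto. intros x y Hx Hy N.
    apply Cdiff_local with q (Cmod (Csub (x, y) zeta)). apply Cmod_pos, Csub_neq0; auto.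
    apply Gq; auto. apply Qd; auto. }
  assert (Bd_ne : forall w, OnBd a b c d w -> w <> zeta).
  { intros w Hw E. subst. unfold OnBd, a, b, c, d in Hw.
    apply Rabs_def2 in Hz1. apply Rabs_def2 in Hz2. lra. }
  assert (CBh : ContBd h a b c d).
  { apply ContRect_Bd; auto. intros x y Hx Hy. apply Cdiff_cont, Hd, InSq; auto. }
  assert (CBi : ContBd (fun w => Cinv (Csub w zeta)) a b c d).
  { split; intros t Ht; split; apply Ccont_inv; try (apply Ccont_sub; [apply Ccont_id|apply Ccont_const]);
    simpl; apply Csub_neq0; apply Bd_ne; unfold OnBd; simpl; lra. }
  assert (E1 : RI g a b c d = RI q a b c d).
  { apply RI_ext; auto. apply ContRect_Bd; auto. intros w Hw. unfold g.
    destruct (Cx_dec w zeta) as [E|_]; auto. exfalso; apply (Bd_ne w); auto. }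
  assert (E2 : RI q a b c d = Csub (RI (fun w => Cmul (h w) (Cinv (Csub w zeta))) a b c d)
                                   (Cmul (h zeta) (RI (fun w => Cinv (Csub w zeta)) a b c d))).
  { rewrite <- RI_scal by auto. rewrite <- RI_sub; auto.
    - f_equal. unfold q. apply functional_extensionality; intros; ring.
    - split; intros t Ht; split; apply Ccont_mul; try apply CBh; try apply CBi; auto.
    - apply ContBd_scal; auto. }
  rewrite G0 in E1. rewrite <- E1 in E2.
  match type of E2 with C0 = Csub ?A ?B => transitivity (Cadd (Csub A B) B); [ring | rewrite <- E2; ring] end.
Qed.


Lemma Ccont1_mod : forall h t, Ccont1 h t -> continuity_pt (fun t => Cmod (h t)) t.
Proof.
  intros h t H e He. destruct (H e He) as [d [Hd Hs]]. exists d; split; auto.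
  intros s [_ Hst]. simpl in *. unfold R_dist in *. specialize (Hs s Hst).
  pose proof (Cmod_sub_ge (h s) (h t)). pose proof (Cmod_sub_ge (h t) (h s)).
  rewrite Cmod_sub_sym in H1. apply Rabs_def1; lra.
Qed.

Lemma seg_bound : forall (h : R -> Cx) a b, a <= b -> PCont h a b ->
  exists M, forall t, a <= t <= b -> Cmod (h t) <= M.
Proof.
  intros h a b Hab Hc. destruct (continuity_ab_maj (fun t => Cmod (h t)) a b Hab) as [Mx [HM _]].
  intros; apply Ccont1_mod; auto. exists (Cmod (h Mx)). auto.
Qed.

Lemma bd_bound : forall u a b c d, a <= b -> c <= d -> ContBd u a b c d ->
  exists M, 0 <= M /\ forall w, OnBd a b c d w -> Cmod (u w) <= M.
Proof.
  intros u a b c d Hab Hcd Hc.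
  destruct (seg_bound (fun x => u (x, c)) a b Hab (Bd_bot a b c d u Hc)) as [M1 H1].
  destruct (seg_bound (fun x => u (x, d)) a b Hab (Bd_top a b c d u Hc)) as [M2 H2].
  destruct (seg_bound (fun y => u (a, y)) c d Hcd (Bd_left a b c d u Hc)) as [M3 H3].
  destruct (seg_bound (fun y => u (b, y)) c d Hcd (Bd_right a b c d u Hc)) as [M4 H4].
  exists (Rmax (Rmax M1 M2) (Rmax M3 M4)). split.
  - pose proof (H1 a ltac:(lra)). pose proof (Cmod_ge0 (u (a, c))).
    eapply Rle_trans; [|apply Rmax_l]. eapply Rle_trans; [|apply Rmax_l]. lra.
  - intros [x y] Hw. unfold OnBd in Hw; simpl in Hw.
    destruct Hw as [[Hx [E|E]]|[Hy [E|E]]]; subst.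
    + eapply Rle_trans; [apply H1; auto|]. eapply Rle_trans; [|apply Rmax_l]. apply Rmax_l.
    + eapply Rle_trans; [apply H2; auto|]. eapply Rle_trans; [|apply Rmax_l]. apply Rmax_r.
    + eapply Rle_trans; [apply H3; auto|]. eapply Rle_trans; [|apply Rmax_r]. apply Rmax_l.
    + eapply Rle_trans; [apply H4; auto|]. eapply Rle_trans; [|apply Rmax_r]. apply Rmax_r.
Qed.

Fixpoint Csum (F : nat -> Cx) (N : nat) : Cx :=
  match N with O => C0 | S n => Cadd (Csum F n) (F n) end.

Lemma RI_zero : forall a b c d, a <= b -> c <= d -> RI (fun _ => C0) a b c d = C0.
Proof.
  intros. replace (fun _ : Cx => C0) with (fun w => Cadd C0 (Cmul C0 w)).
  apply RI_affine; auto. apply functional_extensionality; intros; ring.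
Qed.

Lemma ContBd_Csum : forall a b c d (F : nat -> Cx -> Cx) N,
  (forall n, ContBd (F n) a b c d) -> ContBd (fun w => Csum (fun n => F n w) N) a b c d.
Proof.
  intros a b c d F N HF. induction N; cbn [Csum]. apply ContBd_of_all; intros; apply Ccont_const. apply ContBd_add; auto.
Qed.

Lemma RI_Csum : forall a b c d (F : nat -> Cx -> Cx) N, a <= b -> c <= d ->
  (forall n, ContBd (F n) a b c d) ->
  RI (fun w => Csum (fun n => F n w) N) a b c d = Csum (fun n => RI (F n) a b c d) N.
Proof.
  intros a b c d F N Hab Hcd HF.
  assert (CB : forall N, ContBd (fun w => Csum (fun n => F n w) N) a b c d).
  { induction N0; cbn [Csum]. apply ContBd_of_all; intros; apply Ccont_const. apply ContBd_add; auto. }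
  induction N; cbn [Csum]. apply RI_zero; auto.
  rewrite RI_add; auto. rewrite IHN; auto.
Qed.

Lemma geom_id : forall w z zeta N, Csub w z <> C0 -> Csub w zeta <> C0 ->
  Cinv (Csub w zeta) =
  Cadd (Csum (fun n => Cmul (Cpow (Csub zeta z) n) (Cinv (Cpow (Csub w z) (S n)))) N)
       (Cmul (Cmul (Cpow (Csub zeta z) N) (Cinv (Cpow (Csub w z) N))) (Cinv (Csub w zeta))).
Proof.
  intros w z zeta N H1 H2. induction N.
  - cbn [Csum Cpow]. field. split; auto. apply Cone_neq_C0.
  - cbn [Csum]. rewrite IHN at 1. pose proof (Cpow_neq0 _ N H1).
    cbn [Cpow]. field. repeat split; auto.
Qed.

Lemma Cmod_Csum_zero : forall F N, (forall n, (n < N)%nat -> F n = C0) -> Csum F N = C0.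
Proof. intros F N. induction N; intros H; cbn [Csum]; auto. rewrite IHN, H. ring. lia. intros; apply H; lia. Qed.

Lemma Csum_ext : forall F G N, (forall n, F n = G n) -> Csum F N = Csum G N.
Proof. intros F G N H. induction N; cbn [Csum]; auto. rewrite IHN, H; auto. Qed.

Lemma Csum_mul_l : forall k F N, Csum (fun n => Cmul k (F n)) N = Cmul k (Csum F N).
Proof. intros k F N. induction N; cbn [Csum]. ring. rewrite IHN. ring. Qed.

Section Expansion.
Variables (z : Cx) (s : R).
Hypothesis Hs : 0 < s.
Let a := fst z - s.
Let b := fst z + s.
Let c := snd z - s.
Let d := snd z + s.

Lemma OnBd_far : forall w, OnBd a b c d w -> s <= Cmod (Csub w z).
Proof.
  intros [x y] Hw. unfold OnBd, a, b, c, d in Hw; simpl in Hw. destruct z as [zx zy]. simpl in *.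
  destruct Hw as [[Hx [E|E]]|[Hy [E|E]]]; subst.
  - eapply Rle_trans; [|apply Cmod_snd]. simpl. rewrite Rabs_left1; lra.
  - eapply Rle_trans; [|apply Cmod_snd]. simpl. rewrite Rabs_right; lra.
  - eapply Rle_trans; [|apply Cmod_fst]. simpl. rewrite Rabs_left1; lra.
  - eapply Rle_trans; [|apply Cmod_fst]. simpl. rewrite Rabs_right; lra.
Qed.

Lemma OnBd_ne : forall w, OnBd a b c d w -> Csub w z <> C0.
Proof. intros w Hw E. pose proof (OnBd_far w Hw). rewrite E, Cmod_C0 in H. lra. Qed.

Definition Cterm (u : Cx -> Cx) (n : nat) : Cx :=
  RI (fun w => Cmul (u w) (Cinv (Cpow (Csub w z) (S n)))) (fst z - s) (fst z + s) (snd z - s) (snd z + s).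

Lemma expansion : forall u M zeta N, ContBd u a b c d -> (forall w, OnBd a b c d w -> Cmod (u w) <= M) ->
  Cmod (Csub zeta z) <= s / 2 ->
  Cmod (Csub (RI (fun w => Cmul (u w) (Cinv (Csub w zeta))) a b c d)
             (Csum (fun n => Cmul (Cpow (Csub zeta z) n) (Cterm u n)) N))
   <= 16 * M * (Cmod (Csub zeta z) / s) ^ N.
Proof.
  intros u M zeta N Hu HM Hz.
  assert (Hab : a <= b) by (unfold a, b; lra). assert (Hcd : c <= d) by (unfold c, d; lra).
  set (x := Csub zeta z).
  assert (Far2 : forall w, OnBd a b c d w -> s / 2 <= Cmod (Csub w zeta)).
  { intros w Hw. pose proof (OnBd_far w Hw). pose proof (Cmod_tri3 w zeta z). unfold x in H0. lra. }
  assert (Ne2 : forall w, OnBd a b c d w -> Csub w zeta <> C0).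
  { intros w Hw E. pose proof (Far2 w Hw). rewrite E, Cmod_C0 in H. lra. }
  set (F := fun n w => Cmul (Cpow x n) (Cmul (u w) (Cinv (Cpow (Csub w z) (S n))))).
  set (Rm := fun w => Cmul (u w) (Cmul (Cmul (Cpow x N) (Cinv (Cpow (Csub w z) N))) (Cinv (Csub w zeta)))).
  assert (CF : forall n, ContBd (F n) a b c d).
  { intros n. unfold F. apply ContBd_scal; auto. destruct Hu as [Hu1 Hu2].
    split; intros t Ht; split; apply Ccont_mul; try (apply Hu1 || apply Hu2; auto);
    (apply Ccont_inv; [apply Ccont_pow, Ccont_sub; [apply Ccont_id | apply Ccont_const]|]);
    apply Cpow_neq0, OnBd_ne; unfold OnBd; simpl; lra. }
  assert (CR : ContBd Rm a b c d).
  { unfold Rm. destruct Hu as [Hu1 Hu2].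
    split; intros t Ht; split; apply Ccont_mul; try (apply Hu1 || apply Hu2; auto);
    (apply Ccont_mul; [apply Ccont_mul; [apply Ccont_const|] | ]);
    (apply Ccont_inv; [try apply Ccont_pow; apply Ccont_sub; [apply Ccont_id | apply Ccont_const]|]);
    try apply Cpow_neq0; first [apply OnBd_ne | apply Ne2]; unfold OnBd; simpl; lra. }
  assert (CL : ContBd (fun w => Cmul (u w) (Cinv (Csub w zeta))) a b c d).
  { destruct Hu as [Hu1 Hu2].
    split; intros t Ht; split; apply Ccont_mul; try (apply Hu1 || apply Hu2; auto);
    (apply Ccont_inv; [apply Ccont_sub; [apply Ccont_id | apply Ccont_const]|]);
    apply Ne2; unfold OnBd; simpl; lra. }
  assert (E : RI (fun w => Cmul (u w) (Cinv (Csub w zeta))) a b c d =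
              RI (fun w => Cadd (Csum (fun n => F n w) N) (Rm w)) a b c d).
  { apply RI_ext; auto. intros w Hw. rewrite (geom_id w z zeta N) by (apply OnBd_ne || apply Ne2; auto).
    fold x. replace (Csum (fun n => F n w) N) with (Cmul (u w) (Csum (fun n => Cmul (Cpow x n) (Cinv (Cpow (Csub w z) (S n)))) N)).
    unfold Rm; ring. rewrite <- Csum_mul_l. apply Csum_ext. intros; unfold F; ring. }
  rewrite E. rewrite RI_add; auto.
  2: apply ContBd_Csum; auto.
  rewrite RI_Csum; auto.
  replace (Csum (fun n => RI (F n) a b c d) N) with (Csum (fun n => Cmul (Cpow x n) (Cterm u n)) N).
  2:{ apply Csum_ext. intros n. unfold F. rewrite RI_scal; auto.
      destruct Hu as [Hu1 Hu2].
      split; intros t Ht; split; apply Ccont_mul; try (apply Hu1 || apply Hu2; auto);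
      (apply Ccont_inv; [apply Ccont_pow, Ccont_sub; [apply Ccont_id | apply Ccont_const]|]);
      apply Cpow_neq0, OnBd_ne; unfold OnBd; simpl; lra. }
  replace (Csub (Cadd (Csum (fun n => Cmul (Cpow x n) (Cterm u n)) N) (RI Rm a b c d))
               (Csum (fun n => Cmul (Cpow x n) (Cterm u n)) N)) with (RI Rm a b c d) by ring.
  eapply Rle_trans. apply RI_bound with (M := M * (Cmod x / s) ^ N * (2 / s)); auto.
  - intros w Hw. unfold Rm. rewrite !Cmod_mul, Cmod_inv, Cmod_inv, Cmod_pow, Cmod_pow by (apply Cpow_neq0, OnBd_ne || apply Ne2; auto).
    pose proof (OnBd_far w Hw). pose proof (Far2 w Hw). pose proof (Cmod_ge0 x). pose proof (Cmod_ge0 (u w)).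
    specialize (HM w Hw).
    assert (Cmod x ^ N * / Cmod (Csub w z) ^ N <= (Cmod x / s) ^ N).
    { rewrite <- pow_inv, <- Rpow_mult_distr. unfold Rdiv. apply pow_incr. split.
      - apply Rmult_le_pos; auto. left; apply Rinv_0_lt_compat; lra.
      - apply Rmult_le_compat_l; auto. apply Rinv_le_contravar; lra. }
    assert (/ Cmod (Csub w zeta) <= 2 / s).
    { replace (2 / s) with (/ (s / 2)) by (field; lra). apply Rinv_le_contravar; lra. }
    assert (0 <= Cmod x ^ N * / Cmod (Csub w z) ^ N).
    { apply Rmult_le_pos. apply pow_le; auto. left; apply Rinv_0_lt_compat, pow_lt; lra. }
    assert (0 <= / Cmod (Csub w zeta)) by (left; apply Rinv_0_lt_compat; lra).
    assert (0 <= M) by (pose proof (Cmod_ge0 (u w)); lra).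
    assert (0 <= (Cmod x / s) ^ N) by (apply pow_le; unfold Rdiv; apply Rmult_le_pos; [lra| left; apply Rinv_0_lt_compat; lra]).
    set (A := Cmod x ^ N * / Cmod (Csub w z) ^ N) in *. set (B := / Cmod (Csub w zeta)) in *.
    set (P := (Cmod x / s) ^ N) in *.
    assert (A*B <= P*(2/s)) by (apply Rmult_le_compat; auto).
    assert (0 <= A*B) by (apply Rmult_le_pos; auto).
    apply Rle_trans with (M * (A * B)). apply Rmult_le_compat_r; auto.
    rewrite Rmult_assoc. apply Rmult_le_compat_l; auto.
  - unfold a, b, c, d. right. field. lra.
Qed.

End Expansion.


Lemma RInt_ge_const : forall f a b m, a <= b -> Riemann_integrable f a b ->
  (forall x, a <= x <= b -> m <= f x) -> m * (b - a) <= RInt f a b.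
Proof. intros. rewrite <- RInt_const. apply RInt_le; auto. apply Rint_const. Qed.

Lemma RInt_le_const : forall f a b m, a <= b -> Riemann_integrable f a b ->
  (forall x, a <= x <= b -> f x <= m) -> RInt f a b <= m * (b - a).
Proof. intros. rewrite <- RInt_const. apply RInt_le; auto. apply Rint_const. Qed.

Lemma L1 : forall p s, 0 < s -> p * p <= s * s -> 1 / (2 * s) <= s / (p * p + s * s).
Proof.
  intros p s Hs Hp. assert (0 < p*p+s*s) by nra.
  replace (s / (p*p+s*s)) with (1/(2*s) + (s*s - p*p)/(2*s*(p*p+s*s))) by (field; split; nra).
  assert (0 <= (s*s - p*p)/(2*s*(p*p+s*s))).
  { unfold Rdiv; apply Rmult_le_pos; [lra| left; apply Rinv_0_lt_compat; nra]. }
  lra.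
Qed.

Lemma sq_le : forall p s, Rabs p <= s -> p * p <= s * s.
Proof. intros. pose proof (Rabs_pos p). pose proof (Rsqr_abs p). unfold Rsqr in H1. rewrite H1. nra. Qed.

Lemma Im_Psi : forall z s, 0 < s ->
  4 <= snd (RI (fun w => Cinv (Csub w z)) (fst z - s) (fst z + s) (snd z - s) (snd z + s)).
Proof.
  intros [zx zy] s Hs. simpl fst; simpl snd.
  set (a := zx - s). set (b := zx + s). set (c := zy - s). set (d := zy + s).
  set (g := fun w => Cinv (Csub w (zx, zy))).
  assert (Hab : a <= b) by (unfold a, b; lra). assert (Hcd : c <= d) by (unfold c, d; lra).
  assert (CB : ContBd g a b c d).
  { assert (Hgc : forall w, w <> (zx, zy) -> Ccont g w).
    { intros w N. apply Ccont_inv. apply Ccont_sub; [apply Ccont_id|apply Ccont_const]. apply Csub_neq0; auto. }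
    split; intros t Ht; split; apply Hgc; intro E; injection E; intros; unfold a, b, c, d in *; lra. }
  pose proof (PCont_int_snd _ _ _ Hab (Bd_bot a b c d g CB)) as I1.
  pose proof (PCont_int_snd _ _ _ Hab (Bd_top a b c d g CB)) as I2.
  pose proof (PCont_int_fst _ _ _ Hcd (Bd_left a b c d g CB)) as I3.
  pose proof (PCont_int_fst _ _ _ Hcd (Bd_right a b c d g CB)) as I4.
  assert (J1 : 1 <= RInt (fun x => snd (g (x, c))) a b).
  { replace 1 with (1/(2*s) * (b - a)) by (unfold a, b; field; lra). apply RInt_ge_const; auto.
    intros x Hx. unfold g, Cinv, Csub, Cadd, Copp; simpl.
    replace (c + - zy) with (- s) by (unfold c; ring). replace (- - s) with s by ring.
    replace (-s * -s) with (s*s) by ring. apply L1; auto. apply sq_le. apply Rabs_le. unfold a, b in Hx; lra. }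
  assert (J2 : RInt (fun x => snd (g (x, d))) a b <= -1).
  { replace (-1) with (-(1/(2*s)) * (b - a)) by (unfold a, b; field; lra). apply RInt_le_const; auto.
    intros x Hx. unfold g, Cinv, Csub, Cadd, Copp; simpl.
    replace (d + - zy) with s by (unfold d; ring).
    assert (1/(2*s) <= s / ((x + - zx) * (x + - zx) + s * s)).
    { apply L1; auto. apply sq_le. apply Rabs_le. unfold a, b in Hx; lra. }
    unfold Rdiv in *. rewrite Ropp_mult_distr_l_reverse. lra. }
  assert (J3 : RInt (fun y => fst (g (a, y))) c d <= -1).
  { replace (-1) with (-(1/(2*s)) * (d - c)) by (unfold c, d; field; lra). apply RInt_le_const; auto.
    intros y Hy. unfold g, Cinv, Csub, Cadd, Copp; simpl.
    replace (a + - zx) with (- s) by (unfold a; ring). replace (-s * -s) with (s*s) by ring.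
    assert (1/(2*s) <= s / ((y + - zy) * (y + - zy) + s * s)).
    { apply L1; auto. apply sq_le. apply Rabs_le. unfold c, d in Hy; lra. }
    rewrite Rplus_comm. unfold Rdiv in *. rewrite Ropp_mult_distr_l_reverse. lra. }
  assert (J4 : 1 <= RInt (fun y => fst (g (b, y))) c d).
  { replace 1 with (1/(2*s) * (d - c)) by (unfold c, d; field; lra). apply RInt_ge_const; auto.
    intros y Hy. unfold g, Cinv, Csub, Cadd, Copp; simpl.
    replace (b + - zx) with s by (unfold b; ring). rewrite Rplus_comm.
    apply L1; auto. apply sq_le. apply Rabs_le. unfold c, d in Hy; lra. }
  assert (EQ : snd (RI g a b c d) = RInt (fun x => snd (g (x, c))) a b + RInt (fun y => fst (g (b, y))) c d
     - RInt (fun x => snd (g (x, d))) a b - RInt (fun y => fst (g (a, y))) c d).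
  { unfold RI, Hint, Vint, CI, Csub, Cadd, Copp, Cmul, Ci. simpl. ring. }
  change (4 <= snd (RI g a b c d)). rewrite EQ. lra.
Qed.


Lemma Cmul_eq0 : forall u v, Cmul u v = C0 -> v <> C0 -> u = C0.
Proof. intros u v H N. replace u with (Cmul (Cmul u v) (Cinv v)) by (field; auto). rewrite H. ring. Qed.

Theorem local_IT : forall h z s, 0 < s ->
  (forall w, Sq_in z s w -> Cdifferentiable h w) ->
  (forall eps, 0 < eps -> exists w, w <> z /\ Cmod (Csub w z) < eps /\ h w = C0) ->
  exists r, 0 < r /\ forall w, Cmod (Csub w z) < r -> h w = C0.
Proof.
  intros h z s Hs Hd Hacc.
  set (a := fst z - s). set (b := fst z + s). set (c := snd z - s). set (d := snd z + s).
  assert (Hab : a <= b) by (unfold a, b; lra). assert (Hcd : c <= d) by (unfold c, d; lra).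
  assert (BdSq : forall w, OnBd a b c d w -> Sq_in z s w).
  { intros [x y] Hw. unfold OnBd, Sq_in, a, b, c, d in *; simpl in *.
    destruct Hw as [[Hx [E|E]]|[Hy [E|E]]]; subst; split; apply Rabs_le; lra. }
  assert (CBh : ContBd h a b c d).
  { split; intros t Ht; split; apply Cdiff_cont, Hd, BdSq; unfold OnBd; simpl; lra. }
  destruct (bd_bound h a b c d Hab Hcd CBh) as [M [HM0 HM]].
  set (Psi := fun zeta => RI (fun w => Cinv (Csub w zeta)) a b c d).
  set (H := fun zeta => RI (fun w => Cmul (h w) (Cinv (Csub w zeta))) a b c d).
  set (dn := fun n => Cterm z s h n).
  set (en := fun n => Cterm z s (fun _ => Cone) n).
  assert (Cau : forall zeta, Cmod (Csub zeta z) <= s / 2 -> H zeta = Cmul (h zeta) (Psi zeta)).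
  { intros zeta Hz. apply cauchy_square; auto.
    - assert (HH := Cmod_fst (Csub zeta z)). replace (fst (Csub zeta z)) with (fst zeta - fst z) in HH by (unfold Csub, Cadd, Copp; simpl; ring). lra.
    - assert (HH := Cmod_snd (Csub zeta z)). replace (snd (Csub zeta z)) with (snd zeta - snd z) in HH by (unfold Csub, Cadd, Copp; simpl; ring). lra. }
  assert (ExpH : forall zeta N, Cmod (Csub zeta z) <= s / 2 ->
     Cmod (Csub (H zeta) (Csum (fun n => Cmul (Cpow (Csub zeta z) n) (dn n)) N)) <= 16 * M * (Cmod (Csub zeta z) / s) ^ N).
  { intros zeta N Hz. apply expansion; auto. }
  assert (Exp1 : forall zeta N, Cmod (Csub zeta z) <= s / 2 ->
     Cmod (Csub (Psi zeta) (Csum (fun n => Cmul (Cpow (Csub zeta z) n) (en n)) N)) <= 16 * 1 * (Cmod (Csub zeta z) / s) ^ N).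
  { intros zeta N Hz.
    replace (Psi zeta) with (RI (fun w => Cmul ((fun _ => Cone) w) (Cinv (Csub w zeta))) a b c d).
    apply expansion; auto. apply ContBd_of_all; intros; apply Ccont_const.
    intros; rewrite Cmod_Cone; lra.
    unfold Psi. f_equal. apply functional_extensionality; intros; ring. }
  assert (E0 : 4 <= snd (en 0%nat)).
  { replace (en 0%nat) with (RI (fun w => Cinv (Csub w z)) (fst z - s) (fst z + s) (snd z - s) (snd z + s)).
    apply Im_Psi; auto. unfold en, Cterm. f_equal. apply functional_extensionality; intros w.
    cbn [Cpow]. replace (Cmul (Csub w z) Cone) with (Csub w z) by ring. ring. }
  assert (DZ : forall m, dn m = C0).
  { intros m. induction m as [m IH] using lt_wf_ind.
    destruct (Cx_dec (dn m) C0) as [E|NE]; auto. exfalso.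
    set (eta := Cmod (dn m)). assert (Heta : 0 < eta) by (apply Cmod_pos; auto).
    set (e1 := Rmin (s / 2) (s * (eta * s ^ m / (16 * M + 1)))).
    assert (He1 : 0 < e1).
    { apply Rmin3. lra. apply Rmult_lt_0_compat; auto. apply Rdiv_lt_0_compat; [|lra].
      apply Rmult_lt_0_compat; auto. apply pow_lt; auto. }
    destruct (Hacc e1 He1) as [zeta [Nz [Hz Hh]]].
    set (x := Csub zeta z) in *.
    assert (Hx1 : Cmod x <= s / 2) by (apply Rlt_le, lt_min_l with (s * (eta * s ^ m / (16 * M + 1))); auto).
    assert (Hx2 : Cmod x < s * (eta * s ^ m / (16 * M + 1))) by (apply lt_min_r with (s/2); auto).
    assert (Hxp : 0 < Cmod x) by (apply Cmod_pos, Csub_neq0; auto).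
    pose proof (ExpH zeta (S m) Hx1) as EH. rewrite Cau in EH by auto. rewrite Hh in EH. fold x in EH.
    cbn [Csum] in EH. rewrite Cmod_Csum_zero in EH. 2:{ intros n Hn. rewrite IH by auto. ring. }
    replace (Csub (Cmul C0 (Psi zeta)) (Cadd C0 (Cmul (Cpow x m) (dn m)))) with (Copp (Cmul (Cpow x m) (dn m))) in EH by ring.
    rewrite Cmod_opp, Cmod_mul, Cmod_pow in EH. fold eta in EH.
    set (t := Cmod x / s) in *. assert (Ht : 0 < t) by (unfold t; apply Rdiv_lt_0_compat; auto).
    replace (Cmod x) with (t * s) in EH by (unfold t; field; lra).
    rewrite Rpow_mult_distr in EH. simpl pow in EH.
    assert (Htm : 0 < t ^ m) by (apply pow_lt; auto). assert (Hsm : 0 < s ^ m) by (apply pow_lt; auto).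
    assert (s ^ m * eta <= 16 * M * t).
    { apply Rmult_le_reg_l with (t ^ m); auto. nra. }
    assert (t < eta * s ^ m / (16 * M + 1)).
    { unfold t. apply Rmult_lt_reg_r with s; auto. replace (Cmod x / s * s) with (Cmod x) by (field; lra). lra. }
    assert (16 * M * t <= 16 * M * (eta * s ^ m / (16 * M + 1))) by (apply Rmult_le_compat_l; lra).
    assert (16 * M * (eta * s ^ m / (16 * M + 1)) < eta * s ^ m).
    { replace (16 * M * (eta * s ^ m / (16 * M + 1))) with ((eta * s ^ m) * (16 * M / (16 * M + 1))) by (field; lra).
      assert (16 * M / (16 * M + 1) < 1). { apply Rmult_lt_reg_r with (16 * M + 1); [lra|]. unfold Rdiv. rewrite Rmult_assoc, Rinv_l by lra. lra. }
      assert (0 < eta * s ^ m) by nra. nra. }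
    lra. }
  exists (s / 8). split; [lra|]. intros zeta Hz.
  set (x := Csub zeta z) in *.
  assert (Hx1 : Cmod x <= s / 2) by lra.
  assert (PsiNZ : Psi zeta <> C0).
  { pose proof (Exp1 zeta 1%nat Hx1) as EP. fold x in EP. cbn [Csum Cpow] in EP.
    replace (Cadd C0 (Cmul Cone (en 0%nat))) with (en 0%nat) in EP by ring.
    simpl pow in EP. pose proof (Cmod_snd (Csub (Psi zeta) (en 0%nat))).
    assert (16 * 1 * (Cmod x / s * 1) < 2).
    { replace (16 * 1 * (Cmod x / s * 1)) with (16 * Cmod x / s) by (field; lra).
      apply Rmult_lt_reg_r with s; auto. unfold Rdiv. rewrite Rmult_assoc, Rinv_l by lra. lra. }
    intro E. rewrite E in H0.
    replace (snd (Csub C0 (en 0%nat))) with (- snd (en 0%nat)) in H0 by (unfold Csub, Cadd, Copp, C0; cbn [fst snd]; ring).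
    rewrite E in EP. rewrite Rabs_Ropp in H0. pose proof (Rle_abs (snd (en 0%nat))). lra. }
  assert (HZ : H zeta = C0).
  { destruct (Cx_dec (H zeta) C0) as [E|NE]; auto. exfalso.
    assert (Hp : 0 < Cmod (H zeta)) by (apply Cmod_pos; auto).
    destruct (pow_lt_1_zero (Cmod x / s)) with (y := Cmod (H zeta) / (16 * M + 1)) as [N HN].
    { pose proof (Cmod_ge0 x). rewrite Rabs_pos_eq. apply Rmult_lt_reg_r with s; auto. unfold Rdiv. rewrite Rmult_assoc, Rinv_l by lra. lra.
      unfold Rdiv; apply Rmult_le_pos; [lra| left; apply Rinv_0_lt_compat; lra]. }
    { apply Rdiv_lt_0_compat; lra. }
    specialize (HN N (le_n N)). pose proof (ExpH zeta N Hx1) as EH. fold x in EH.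
    rewrite Cmod_Csum_zero in EH. 2:{ intros n _. rewrite DZ. ring. }
    replace (Csub (H zeta) C0) with (H zeta) in EH by ring.
    rewrite Rabs_pos_eq in HN. 2:{ apply pow_le. pose proof (Cmod_ge0 x). unfold Rdiv; apply Rmult_le_pos; [lra| left; apply Rinv_0_lt_compat; lra]. }
    assert (16 * M * (Cmod x / s) ^ N <= 16 * M * (Cmod (H zeta) / (16 * M + 1))) by (apply Rmult_le_compat_l; lra).
    assert (16 * M * (Cmod (H zeta) / (16 * M + 1)) < Cmod (H zeta)).
    { replace (16 * M * (Cmod (H zeta) / (16 * M + 1))) with (Cmod (H zeta) * (16 * M / (16 * M + 1))) by (field; lra).
      assert (16 * M / (16 * M + 1) < 1). { apply Rmult_lt_reg_r with (16 * M + 1); [lra|]. unfold Rdiv. rewrite Rmult_assoc, Rinv_l by lra. lra. }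
      nra. }
    lra. }
  rewrite Cau in HZ by auto. apply Cmul_eq0 in HZ; auto.
Qed.


Lemma Cmod_pair_x : forall t, Cmod (t, 0) = Rabs t.
Proof. intros. apply (Cmod_RC t). Qed.

Lemma perturb : forall w z eps rw, 0 < eps -> 0 < rw -> Cmod (Csub w z) < eps / 2 ->
  exists w', w' <> z /\ Cmod (Csub w' z) < eps /\ Cmod (Csub w' w) < rw.
Proof.
  intros w z eps rw He Hr Hw. destruct (Cx_dec w z) as [E|N].
  - subst. set (t := Rmin (eps/2) (rw/2)). assert (Ht : 0 < t) by (apply Rmin3; lra).
    assert (t <= eps/2) by apply Rmin_l. assert (t <= rw/2) by apply Rmin_r.
    exists (Cadd z (t, 0)). replace (Csub (Cadd z (t, 0)) z) with ((t, 0) : Cx) by (apply Cx_eq; unfold Csub, Cadd, Copp; simpl; ring).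
    rewrite Cmod_pair_x, Rabs_pos_eq by lra. split; [|split; lra].
    intro E. apply (f_equal fst) in E. unfold Cadd in E; simpl in E. lra.
  - exists w. split; auto. split. lra. replace (Csub w w) with C0 by ring. rewrite Cmod_C0; auto.
Qed.

Lemma ball_in_ball : forall z w r, Cmod (Csub w z) < r -> forall w', Cmod (Csub w' w) < r - Cmod (Csub w z) ->
  Cmod (Csub w' z) < r.
Proof. intros. pose proof (Cmod_tri3 w' w z). lra. Qed.

Lemma Sq_in_ball : forall z s w, Sq_in z s w -> Cmod (Csub w z) <= 2 * s.
Proof.
  intros z s w [H1 H2]. eapply Rle_trans; [apply Cmod_le_abs|].
  unfold Csub, Cadd, Copp; simpl. unfold Rminus in *. lra.
Qed.

Theorem global_IT : forall D f k z0 r0, Cdomain D -> meromorphic D f -> D z0 -> 0 < r0 ->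
  (forall w, Cmod (Csub w z0) < r0 -> f w = k) -> forall z, D z -> f z = k.
Proof.
  intros D f k z0 r0 [Dopen [_ Dconn]] [Mer1 Mer2] Dz0 Hr0 Hc z Dz.
  set (U := fun z => exists r, 0 < r /\ forall w, Cmod (Csub w z) < r -> f w = k).
  set (V := fun z => exists r, 0 < r /\ forall w, Cmod (Csub w z) < r -> ~ U w).
  assert (UD : U z0) by (exists r0; auto).
  assert (Uk : forall z, U z -> f z = k).
  { intros y [r [Hr H]]. apply H. replace (Csub y y) with C0 by ring. rewrite Cmod_C0; auto. }
  assert (Uacc : forall y eps, 0 < eps -> (forall r, 0 < r -> exists w, Cmod (Csub w y) < r /\ U w) ->
            exists w, w <> y /\ Cmod (Csub w y) < eps /\ f w = k).
  { intros y eps He Hnv. destruct (Hnv (eps/2)) as [w [Hw [rw [Hrw Hf]]]]; [lra|].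
    destruct (perturb w y eps rw He Hrw Hw) as [w' [N [H1 H2]]]. exists w'. auto. }
  assert (Cover : forall y, D y -> U y \/ V y).
  { intros y Dy. destruct (classic (V y)) as [HV|HV]; [right; auto|left].
    assert (Hnv : forall r, 0 < r -> exists w, Cmod (Csub w y) < r /\ U w).
    { intros r Hr. apply NNPP. intro C. apply HV. exists r. split; auto. intros w Hw Uw. apply C. exists w; auto. }
    destruct (Mer1 y Dy) as [Hdy|Hpole].
    + destruct (Mer2 y Dy) as [r1 [Hr1 Hnp]].
      destruct (Dopen y Dy) as [r2 [Hr2 HD]].
      set (r3 := Rmin r1 r2). assert (Hr3 : 0 < r3) by (apply Rmin3; auto).
      set (h := fun w => Csub (f w) k).
      destruct (local_IT h y (r3 / 4)) as [r [Hr Hh]].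
      * lra.
      * intros w Hw. pose proof (Sq_in_ball _ _ _ Hw). unfold h. apply Cdiff_sub; [|apply Cdiff_const].
        destruct (Cx_dec w y) as [E|N]; [subst; auto|].
        assert (Cmod (Csub w y) < r1) by (apply Rle_lt_trans with (2*(r3/4)); [lra|]; apply Rlt_le_trans with r3; [lra|apply Rmin_l]).
        assert (Cmod (Csub w y) < r2) by (apply Rle_lt_trans with (2*(r3/4)); [lra|]; apply Rlt_le_trans with r3; [lra|apply Rmin_r]).
        destruct (Mer1 w (HD w H1)) as [Hd|Hp]; auto. exfalso; apply (Hnp w); auto.
      * intros eps He. destruct (Uacc y eps He Hnv) as [w [N [H1 H2]]]. exists w. split; auto. split; auto.
        unfold h; rewrite H2; ring.
      * exists r. split; auto. intros w Hw. specialize (Hh w Hw). unfold h in Hh.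
        replace (f w) with (Cadd (Csub (f w) k) k) by ring. rewrite Hh; ring.
    + exfalso. destruct (Hpole (Cmod k)) as [del [Hdel Hp]].
      destruct (Uacc y del Hdel Hnv) as [w [N [H1 H2]]]. specialize (Hp w N H1). rewrite H2 in Hp. lra. }
  apply NNPP. intros Nk.
  apply (Dconn U V).
  - intros y [r [Hr H]]. exists r. split; auto. intros w Hw. exists (r - Cmod (Csub w y)). split; [lra|].
    intros w' Hw'. apply H. eapply ball_in_ball; eauto.
  - intros y [r [Hr H]]. exists r. split; auto. intros w Hw. exists (r - Cmod (Csub w y)). split; [lra|].
    intros w' Hw'. apply H. eapply ball_in_ball; eauto.
  - intros y Dy; apply Cover; auto.
  - intros y _ [r [Hr H]] HVy. destruct HVy as [r' [Hr' H']]. apply (H' y).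
    replace (Csub y y) with C0 by ring. rewrite Cmod_C0; auto. exists r; auto.
  - exists z0; auto.
  - exists z. split; auto. destruct (Cover z Dz) as [HU|HV]; auto. exfalso. apply Nk, Uk; auto.
Qed.


Definition cross (u c : Cx) : R := snd u * fst c - fst u * snd c.

Lemma cross_bound : forall u c, Rabs (cross u c) <= 2 * Cmod u * Cmod c.
Proof.
  intros u c. unfold cross. eapply Rle_trans; [apply Rabs_triang|]. rewrite Rabs_Ropp, !Rabs_mult.
  pose proof (Cmod_fst u); pose proof (Cmod_snd u); pose proof (Cmod_fst c); pose proof (Cmod_snd c).
  pose proof (Rabs_pos (fst u)); pose proof (Rabs_pos (snd u)); pose proof (Rabs_pos (fst c)); pose proof (Rabs_pos (snd c)).
  assert (Rabs (snd u) * Rabs (fst c) <= Cmod u * Cmod c) by (apply Rmult_le_compat; auto).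
  assert (Rabs (fst u) * Rabs (snd c) <= Cmod u * Cmod c) by (apply Rmult_le_compat; auto). lra.
Qed.

Lemma dir_zero : forall f c p rho z1 phi r e, Cmod e = 1 -> Cmod (Csub p z1) < rho -> 0 < r -> Ccont phi p ->
  (forall w, Cmod (Csub w p) < r -> Csub (f w) (f p) = Cmul (phi w) (Csub w p)) ->
  (forall w, Cmod (Csub w z1) < rho -> cross (f w) c = 0) ->
  cross (Cmul (phi p) e) c = 0.
Proof.
  intros f c p rho z1 phi r e He Hp Hr Hc Hid Hcr.
  destruct (Req_dec (cross (Cmul (phi p) e) c) 0) as [E|NE]; auto. exfalso.
  set (eta := Rabs (cross (Cmul (phi p) e) c)). assert (Heta : 0 < eta) by (apply Rabs_pos_lt; auto).
  destruct (Hc (eta / (2 * Cmod c + 1))) as [del [Hdel Hphi]].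
  { apply Rdiv_lt_0_compat; auto. pose proof (Cmod_ge0 c); lra. }
  set (t := Rmin (Rmin del r) (rho - Cmod (Csub p z1)) / 2).
  assert (Ht : 0 < t) by (unfold t; apply Rdiv_lt_0_compat; [apply Rmin3; [apply Rmin3|]|]; lra).
  assert (Ht1 : t < del) by (unfold t; pose proof (Rmin_l (Rmin del r) (rho - Cmod (Csub p z1))); pose proof (Rmin_l del r); lra).
  assert (Ht2 : t < r) by (unfold t; pose proof (Rmin_l (Rmin del r) (rho - Cmod (Csub p z1))); pose proof (Rmin_r del r); lra).
  assert (Ht3 : t < rho - Cmod (Csub p z1)) by (unfold t; pose proof (Rmin_r (Rmin del r) (rho - Cmod (Csub p z1))); lra).
  set (w := Cadd p (Cmul (RC t) e)).
  assert (Hwp : Cmod (Csub w p) = t).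
  { unfold w. replace (Csub (Cadd p (Cmul (RC t) e)) p) with (Cmul (RC t) e) by ring.
    rewrite Cmod_mul, Cmod_RC, He, Rabs_pos_eq; lra. }
  assert (Hw1 : Cmod (Csub w z1) < rho) by (pose proof (Cmod_tri3 w p z1); lra).
  assert (Hz : cross (Cmul (phi w) e) c = 0).
  { pose proof (Hid w ltac:(lra)) as I. pose proof (Hcr w Hw1) as C1. pose proof (Hcr p Hp) as C2.
    assert (cross (Csub (f w) (f p)) c = 0) by (unfold cross in *; unfold Csub, Cadd, Copp; simpl; lra).
    rewrite I in H. unfold w in H. replace (Csub (Cadd p (Cmul (RC t) e)) p) with (Cmul (RC t) e) in H by ring.
    replace (cross (Cmul (phi (Cadd p (Cmul (RC t) e))) (Cmul (RC t) e)) c) with (t * cross (Cmul (phi w) e) c) in H.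
    2:{ unfold cross, w, RC, Cmul; simpl. ring. }
    apply Rmult_integral in H. destruct H; auto. lra. }
  specialize (Hphi w ltac:(lra)).
  assert (Rabs (cross (Cmul (Csub (phi w) (phi p)) e) c) <= 2 * Cmod (Csub (phi w) (phi p)) * Cmod c).
  { eapply Rle_trans; [apply cross_bound|]. rewrite Cmod_mul, He. lra. }
  replace (cross (Cmul (Csub (phi w) (phi p)) e) c) with (cross (Cmul (phi w) e) c - cross (Cmul (phi p) e) c) in H
    by (unfold cross, Cmul, Csub, Cadd, Copp; simpl; ring).
  rewrite Hz, Rminus_0_l, Rabs_Ropp in H. fold eta in H.
  assert (2 * Cmod (Csub (phi w) (phi p)) * Cmod c <= eta / (2 * Cmod c + 1) * (2 * Cmod c)).
  { pose proof (Cmod_ge0 c). replace (2 * Cmod (Csub (phi w) (phi p)) * Cmod c) with (Cmod (Csub (phi w) (phi p)) * (2 * Cmod c)) by ring.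
    apply Rmult_le_compat_r; lra. }
  assert (eta / (2 * Cmod c + 1) * (2 * Cmod c) < eta).
  { pose proof (Cmod_ge0 c). replace (eta / (2 * Cmod c + 1) * (2 * Cmod c)) with (eta * ((2 * Cmod c) / (2 * Cmod c + 1))) by (field; lra).
    assert ((2 * Cmod c) / (2 * Cmod c + 1) < 1). { apply Rmult_lt_reg_r with (2 * Cmod c + 1); [lra|]. unfold Rdiv. rewrite Rmult_assoc, Rinv_l by lra. lra. }
    nra. }
  lra.
Qed.

Lemma deriv_zero : forall f c z1 rho p, c <> C0 -> Cmod (Csub p z1) < rho ->
  (forall w, Cmod (Csub w z1) < rho -> Cdifferentiable f w) ->
  (forall w, Cmod (Csub w z1) < rho -> cross (f w) c = 0) ->
  exists phi r, 0 < r /\ Ccont phi p /\ phi p = C0 /\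
    forall w, Cmod (Csub w p) < r -> Csub (f w) (f p) = Cmul (phi w) (Csub w p).
Proof.
  intros f c z1 rho p Nc Hp Hd Hcr.
  destruct (Cdiff_carath f p (Hd p Hp)) as [phi [r [Hr [Hc Hid]]]].
  exists phi, r. repeat split; auto.
  assert (Cmod ((1, 0) : Cx) = 1) by (rewrite Cmod_pair_x; apply Rabs_R1).
  pose proof (dir_zero f c p rho z1 phi r (1, 0) H) as D1.
  assert (Cmod ((0, 1) : Cx) = 1) by (apply Cmod_Ci).
  pose proof (dir_zero f c p rho z1 phi r (0, 1) H0) as D2.
  specialize (D1 Hp Hr Hc Hid Hcr). specialize (D2 Hp Hr Hc Hid Hcr).
  unfold cross, Cmul in D1, D2; simpl in D1, D2.
  destruct (phi p) as [u v]. destruct c as [c1 c2]. simpl in *.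
  assert (Hc2 : 0 < c1 * c1 + c2 * c2) by (apply (Cnorm2_pos (c1, c2)); auto).
  assert (E1 : v * c1 - u * c2 = 0) by (rewrite <- D1; ring).
  assert (E2 : u * c1 + v * c2 = 0) by (rewrite <- D2; ring).
  assert (u * (c1*c1+c2*c2) = 0) by (replace (u * (c1*c1+c2*c2)) with (c1 * (u*c1 + v*c2) - c2 * (v*c1 - u*c2)) by ring; rewrite E1, E2; ring).
  assert (v * (c1*c1+c2*c2) = 0) by (replace (v * (c1*c1+c2*c2)) with (c1 * (v*c1 - u*c2) + c2 * (u*c1 + v*c2)) by ring; rewrite E1, E2; ring).
  apply Rmult_integral in H1. apply Rmult_integral in H2.
  unfold C0. apply Cpair_eq. split; [destruct H1|destruct H2]; auto; lra.
Qed.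


Lemma deriv_proj : forall (pr : Cx -> R) f z1 v t phi r,
  (forall u w, pr (Csub u w) = pr u - pr w) -> (forall h X, pr (Cmul X (Cmul (RC h) v)) = h * pr (Cmul X v)) ->
  (forall u, Rabs (pr u) <= Cmod u) ->
  0 < r -> Ccont phi (Cadd z1 (Cmul (RC t) v)) -> phi (Cadd z1 (Cmul (RC t) v)) = C0 ->
  (forall w, Cmod (Csub w (Cadd z1 (Cmul (RC t) v))) < r ->
      Csub (f w) (f (Cadd z1 (Cmul (RC t) v))) = Cmul (phi w) (Csub w (Cadd z1 (Cmul (RC t) v)))) ->
  derivable_pt_lim (fun t => pr (f (Cadd z1 (Cmul (RC t) v)))) t 0.
Proof.
  intros pr f z1 v t phi r Psub Pscal Pabs Hr Hc H0 Hid.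
  set (p := Cadd z1 (Cmul (RC t) v)) in *.
  intros e He. set (V := Cmod v + 1). assert (HV : 0 < V) by (pose proof (Cmod_ge0 v); unfold V; lra).
  destruct (Hc (e / V)) as [del [Hdel Hphi]]. { apply Rdiv_lt_0_compat; auto. }
  assert (Hd : 0 < Rmin del r / V) by (apply Rdiv_lt_0_compat; [apply Rmin3|]; auto).
  exists (mkposreal _ Hd). intros h Hh Hhd. simpl in Hhd.
  assert (Ep : Cadd z1 (Cmul (RC (t + h)) v) = Cadd p (Cmul (RC h) v)).
  { unfold p. apply Cx_eq; unfold Cadd, Cmul, RC; simpl; ring. }
  rewrite Ep. set (w := Cadd p (Cmul (RC h) v)).
  assert (Hwp : Cmod (Csub w p) < Rmin del r).
  { unfold w. replace (Csub (Cadd p (Cmul (RC h) v)) p) with (Cmul (RC h) v) by ring.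
    rewrite Cmod_mul, Cmod_RC. pose proof (Cmod_ge0 v). pose proof (Rabs_pos h).
    apply Rle_lt_trans with (Rabs h * V). unfold V; nra.
    replace (Rmin del r) with (Rmin del r / V * V) by (field; lra). apply Rmult_lt_compat_r; auto. }
  rewrite <- Psub. rewrite Hid by (eapply Rlt_le_trans; [apply Hwp|apply Rmin_r]).
  unfold w. replace (Csub (Cadd p (Cmul (RC h) v)) p) with (Cmul (RC h) v) by ring.
  rewrite Pscal. replace (h * pr (Cmul (phi (Cadd p (Cmul (RC h) v))) v) / h - 0) with (pr (Cmul (phi (Cadd p (Cmul (RC h) v))) v)) by (field; auto).
  eapply Rle_lt_trans; [apply Pabs|]. fold w. rewrite Cmod_mul.
  replace (phi w) with (Csub (phi w) (phi p)) by (rewrite H0; ring).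
  specialize (Hphi w (Rlt_le_trans _ _ _ Hwp (Rmin_l _ _))).
  pose proof (Cmod_ge0 v). pose proof (Cmod_ge0 (Csub (phi w) (phi p))).
  apply Rle_lt_trans with (e / V * Cmod v). apply Rmult_le_compat_r; lra.
  replace (e / V * Cmod v) with (e * (Cmod v / V)) by (field; lra).
  assert (Cmod v / V < 1). { apply Rmult_lt_reg_r with V; auto. unfold Rdiv. rewrite Rmult_assoc, Rinv_l by lra. unfold V; lra. }
  nra.
Qed.

Lemma const_of_cross : forall f c z1 rho, c <> C0 -> 0 < rho ->
  (forall w, Cmod (Csub w z1) < rho -> Cdifferentiable f w) ->
  (forall w, Cmod (Csub w z1) < rho -> cross (f w) c = 0) ->
  forall w, Cmod (Csub w z1) < rho -> f w = f z1.
Proof.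
  intros f c z1 rho Nc Hrho Hd Hcr w Hw.
  set (v := Csub w z1).
  set (P := fun t => Cadd z1 (Cmul (RC t) v)).
  assert (HP : forall t, 0 <= t <= 1 -> Cmod (Csub (P t) z1) < rho).
  { intros t Ht. unfold P. replace (Csub (Cadd z1 (Cmul (RC t) v)) z1) with (Cmul (RC t) v) by ring.
    rewrite Cmod_mul, Cmod_RC, Rabs_pos_eq by lra. fold v in Hw. pose proof (Cmod_ge0 v). nra. }
  assert (DL : forall (pr : Cx -> R), (forall u w, pr (Csub u w) = pr u - pr w) ->
     (forall h X, pr (Cmul X (Cmul (RC h) v)) = h * pr (Cmul X v)) -> (forall u, Rabs (pr u) <= Cmod u) ->
     forall t, 0 <= t <= 1 -> derivable_pt_lim (fun t => pr (f (P t))) t 0).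
  { intros pr P1 P2 P3 t Ht.
    destruct (deriv_zero f c z1 rho (P t) Nc (HP t Ht) Hd Hcr) as [phi [r [Hr [Hc [H0 Hid]]]]].
    apply (deriv_proj pr f z1 v t phi r); auto. }
  assert (CONST : forall (pr : Cx -> R), (forall u w, pr (Csub u w) = pr u - pr w) ->
     (forall h X, pr (Cmul X (Cmul (RC h) v)) = h * pr (Cmul X v)) -> (forall u, Rabs (pr u) <= Cmod u) ->
     pr (f (P 1)) = pr (f (P 0))).
  { intros pr P1 P2 P3.
    set (F := fun t => pr (f (P t))).
    assert (HDL : forall t, 0 <= t <= 1 -> derivable_pt_lim F t 0) by (intros; apply DL; auto).
    pose (prd := fun x (Hx : 0 < x < 1) => exist (fun l => derivable_pt_lim F x l) 0 (HDL x (conj (Rlt_le _ _ (proj1 Hx)) (Rlt_le _ _ (proj2 Hx))))).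
    pose proof (null_derivative_loc F 0 1 prd) as N.
    apply N. intros x Hx. apply derivable_continuous_pt. exists 0. apply HDL; auto.
    intros x Hx. reflexivity. lra. }
  assert (E1 : P 1 = w) by (unfold P, v; apply Cx_eq; unfold Cadd, Cmul, RC, Csub, Copp; simpl; ring).
  assert (E0 : P 0 = z1) by (unfold P, v; apply Cx_eq; unfold Cadd, Cmul, RC, Csub, Copp; simpl; ring).
  rewrite <- E1, <- E0. apply Cx_eq.
  - apply (CONST fst). intros; unfold Csub, Cadd, Copp; simpl; ring.
    intros; unfold Cmul, RC; simpl; ring. apply Cmod_fst.
  - apply (CONST snd). intros; unfold Csub, Cadd, Copp; simpl; ring.
    intros; unfold Cmul, RC; simpl; ring. apply Cmod_snd.
Qed.


Definition pv (u : Cx) : Cx := Cscale (/ Cmod u) u.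

Lemma pv_scale : forall u v, u <> C0 -> v <> C0 -> pv u = pv v -> u = Cscale (Cmod u / Cmod v) v.
Proof.
  intros u v Nu Nv E. pose proof (Cmod_pos u Nu). pose proof (Cmod_pos v Nv).
  unfold pv, Cscale in E. apply Cpair_eq in E as [E1 E2].
  apply Cx_eq; unfold Cscale; simpl.
  - replace (fst u) with (Cmod u * (/ Cmod u * fst u)) by (field; lra). rewrite E1. field; lra.
  - replace (snd u) with (Cmod u * (/ Cmod u * snd u)) by (field; lra). rewrite E2. field; lra.
Qed.

Lemma alg_key : forall a b c, c <> C0 -> a <> b -> a <> C0 -> b <> C0 -> Cadd a c <> C0 -> Cadd b c <> C0 ->
  pv a = pv b -> pv (Cadd a c) = pv (Cadd b c) -> cross a c = 0.
Proof.
  intros a b c Nc Nab Na Nb Nac Nbc E1 E2.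
  apply pv_scale in E1; auto. apply pv_scale in E2; auto.
  set (t := Cmod a / Cmod b) in *. set (s := Cmod (Cadd a c) / Cmod (Cadd b c)) in *. clearbody t s.
  destruct a as [a1 a2]; destruct b as [b1 b2]; destruct c as [c1 c2].
  unfold Cscale, Cadd in E1, E2; simpl in E1, E2. apply Cpair_eq in E1 as [A1 A2]. apply Cpair_eq in E2 as [B1 B2].
  unfold cross; simpl.
  assert (K1 : (t - s) * b1 = (s - 1) * c1) by nra. assert (K2 : (t - s) * b2 = (s - 1) * c2) by nra.
  assert (K : (t - s) * (b2 * c1 - b1 * c2) = 0).
  { replace ((t - s) * (b2 * c1 - b1 * c2)) with (((t - s) * b2) * c1 - ((t - s) * b1) * c2) by ring.
    rewrite K1, K2. ring. }
  apply Rmult_integral in K. destruct K as [K|K].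
  - exfalso. assert (s = t) by lra. subst s. rewrite K in *.
    assert (H1 : (t - 1) * c1 = 0) by nra. assert (H2 : (t - 1) * c2 = 0) by nra.
    destruct (Req_dec t 1) as [T|T].
    + apply Nab. rewrite T in A1, A2. apply Cpair_eq. lra.
    + apply Nc. apply Rmult_integral in H1. apply Rmult_integral in H2. unfold C0. apply Cpair_eq.
      destruct H1; destruct H2; split; lra.
  - replace (a2 * c1 - a1 * c2) with (t * (b2 * c1 - b1 * c2)) by (rewrite A1, A2; ring). rewrite K; ring.
Qed.

Lemma pv_neq : forall u e1 e2, u <> C0 -> e1 <> C0 -> Cmod e1 = Cmod e2 -> e1 <> e2 -> pv (Cmul u e1) <> pv (Cmul u e2).
Proof.
  intros u e1 e2 Nu N1 Hm Ne E. unfold pv in E. rewrite !Cmod_mul, Hm in E.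
  assert (pu : 0 < Cmod u) by (apply Cmod_pos; auto). assert (pe : 0 < Cmod e2) by (rewrite <- Hm; apply Cmod_pos; auto).
  assert (HM : 0 < Cmod u * Cmod e2) by (apply Rmult_lt_0_compat; auto).
  assert (Cmul u e1 = Cmul u e2).
  { unfold Cscale in E. apply Cpair_eq in E as [E1 E2]. apply Cx_eq.
    - replace (fst (Cmul u e1)) with (Cmod u * Cmod e2 * (/ (Cmod u * Cmod e2) * fst (Cmul u e1))) by (field; lra).
      rewrite E1. field; lra.
    - replace (snd (Cmul u e1)) with (Cmod u * Cmod e2 * (/ (Cmod u * Cmod e2) * snd (Cmul u e1))) by (field; lra).
      rewrite E2. field; lra. }
  apply Ne. replace e1 with (Cmul (Cinv u) (Cmul u e1)) by (field; auto). rewrite H. field; auto.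
Qed.

Lemma Cmul_neq0 : forall u v, u <> C0 -> v <> C0 -> Cmul u v <> C0.
Proof. intros u v Nu Nv E. apply Nv. replace v with (Cmul (Cinv u) (Cmul u v)) by (field; auto). rewrite E; ring. Qed.

Lemma pv_neq2 : forall u e1 e2, u <> C0 -> e1 <> C0 -> e2 <> C0 -> (forall r, e1 <> Cscale r e2) ->
  pv (Cmul u e1) <> pv (Cmul u e2).
Proof.
  intros u e1 e2 Nu N1 N2 Hr E. apply pv_scale in E; try apply Cmul_neq0; auto.
  set (r := Cmod (Cmul u e1) / Cmod (Cmul u e2)) in *.
  apply (Hr r). replace e1 with (Cmul (Cinv u) (Cmul u e1)) by (field; auto). rewrite E.
  apply Cx_eq; unfold Cscale, Cmul, Cinv; simpl; field; pose proof (Cnorm2_pos u Nu); lra.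
Qed.

Lemma choose_c : forall a b, a <> b -> exists c, c <> C0 /\ Cadd a c <> C0 /\ Cadd b c <> C0 /\
  pv (Cadd a c) <> pv (Cadd b c).
Proof.
  intros a b Nab. set (d := Csub a b).
  assert (Nd : d <> C0) by (apply Csub_neq0; auto).
  assert (NZ : forall p q : R, p <> 0 \/ q <> 0 -> (p, q) <> C0).
  { intros p q Hp E. apply Cpair_eq in E; lra. }
  destruct (Cx_dec (Cadd (Copp a) (Cmul d Ci)) C0) as [E1|N1].
  - exists (Csub (Copp a) (Cmul d Ci)).
    assert (Ea : Cadd a (Csub (Copp a) (Cmul d Ci)) = Cmul d (0, -1)).
    { replace ((0, -1) : Cx) with (Copp Ci) by (apply Cx_eq; unfold Copp, Ci; simpl; ring). ring. }
    assert (Eb : Cadd b (Csub (Copp a) (Cmul d Ci)) = Cmul d (-1, -1)).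
    { replace ((-1, -1) : Cx) with (Copp (Cadd Cone Ci)) by (apply Cx_eq; unfold Cadd, Copp, Cone, Ci; simpl; ring). unfold d. ring. }
    rewrite Ea, Eb. repeat split.
    + intro E2. apply Nd. assert (E3 : Cadd (Cadd (Copp a) (Cmul d Ci)) (Csub (Copp a) (Cmul d Ci)) = C0) by (rewrite E1, E2; ring).
      assert (a = C0). { replace a with (Cmul (Copp (Cinv (Cadd Cone Cone))) (Cadd (Cadd (Copp a) (Cmul d Ci)) (Csub (Copp a) (Cmul d Ci)))).
        rewrite E3; ring. field. intro E. apply Cpair_eq in E. unfold Cadd, Cone in E; simpl in E. lra. }
      rewrite H in E1. replace d with (Cmul (Cmul (Copp Ci) Ci) d) by (apply Cx_eq; unfold Cmul, Copp, Ci; simpl; ring).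
      replace (Cmul (Cmul (Copp Ci) Ci) d) with (Cmul (Copp Ci) (Cadd (Copp C0) (Cmul d Ci))) by ring. rewrite E1; ring.
    + apply Cmul_neq0; auto; try (apply NZ; lra).
    + apply Cmul_neq0; auto; try (apply NZ; lra).
    + apply pv_neq2; auto; try (apply NZ; lra). intros r E. unfold Cscale in E. apply Cpair_eq in E. simpl in E. lra.
  - exists (Cadd (Copp a) (Cmul d Ci)).
    assert (Ea : Cadd a (Cadd (Copp a) (Cmul d Ci)) = Cmul d (0, 1)). { unfold Ci. ring. }
    assert (Eb : Cadd b (Cadd (Copp a) (Cmul d Ci)) = Cmul d (-1, 1)).
    { replace ((-1, 1) : Cx) with (Csub Ci Cone) by (apply Cx_eq; unfold Csub, Cadd, Copp, Cone, Ci; simpl; ring). unfold d. ring. }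
    rewrite Ea, Eb. split; [exact N1|]. repeat split.
    + apply Cmul_neq0; auto; try (apply NZ; lra).
    + apply Cmul_neq0; auto; try (apply NZ; lra).
    + apply pv_neq2; auto; try (apply NZ; lra). intros r E. unfold Cscale in E. apply Cpair_eq in E. simpl in E. lra.
Qed.


Lemma pole_shift : forall f c z, pole (Cshift f c) z <-> pole f z.
Proof.
  intros f c z. unfold pole, Cshift. split; intros H M.
  - destruct (H (M + Cmod c)) as [d [Hd H']]. exists d; split; auto. intros w Nw Hw.
    specialize (H' w Nw Hw). pose proof (Cmod_sub_ge (Cadd (f w) c) c).
    replace (Csub (Cadd (f w) c) c) with (f w) in H0 by ring. lra.
  - destruct (H (M + Cmod c)) as [d [Hd H']]. exists d; split; auto. intros w Nw Hw.
    specialize (H' w Nw Hw). pose proof (Cmod_sub_ge (f w) (Copp c)).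
    replace (Csub (f w) (Copp c)) with (Cadd (f w) c) in H0 by ring. rewrite Cmod_opp in H0. lra.
Qed.

Lemma near_pt : forall z r, 0 < r -> exists w, w <> z /\ Cmod (Csub w z) < r.
Proof.
  intros z r Hr. destruct (perturb z z r (r/2) Hr ltac:(lra)) as [w [N [H _]]].
  replace (Csub z z) with C0 by ring. rewrite Cmod_C0; lra. exists w; auto.
Qed.

Lemma mer_diff : forall D f w, meromorphic D f -> D w -> ~ pole f w -> Cdifferentiable f w.
Proof. intros D f w [H _] Dw Np. destruct (H w Dw); auto; contradiction. Qed.

Lemma pole_mismatch : forall D f g z, Copen D -> meromorphic D f -> meromorphic D g -> D z ->
  pole f z -> ~ pole g z -> exists z1, D z1 /\ ~ pole f z1 /\ ~ pole g z1 /\ f z1 <> g z1.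
Proof.
  intros D f g z Dop Mf Mg Dz Pf Npg.
  pose proof (Cdiff_cont g z (mer_diff D g z Mg Dz Npg)) as Cg.
  destruct (Ccont_bound g z Cg) as [d1 [Hd1 B1]].
  destruct (Pf (Cmod (g z) + 1)) as [d2 [Hd2 B2]].
  destruct (proj2 Mf z Dz) as [d3 [Hd3 B3]].
  destruct (proj2 Mg z Dz) as [d4 [Hd4 B4]].
  destruct (Dop z Dz) as [d5 [Hd5 B5]].
  set (r := Rmin (Rmin d1 d2) (Rmin d3 (Rmin d4 d5))).
  assert (Hr : 0 < r) by (unfold r; repeat apply Rmin3; auto).
  destruct (near_pt z r Hr) as [w [N Hw]].
  assert (W1 : Cmod (Csub w z) < d1) by (unfold r in Hw; eapply lt_min_l, lt_min_l; eauto).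
  assert (W2 : Cmod (Csub w z) < d2) by (unfold r in Hw; eapply lt_min_r, lt_min_l; eauto).
  assert (W3 : Cmod (Csub w z) < d3) by (unfold r in Hw; eapply lt_min_l, lt_min_r; eauto).
  assert (W4 : Cmod (Csub w z) < d4) by (unfold r in Hw; eapply lt_min_l, lt_min_r, lt_min_r; eauto).
  assert (W5 : Cmod (Csub w z) < d5) by (unfold r in Hw; eapply lt_min_r, lt_min_r, lt_min_r; eauto).
  exists w. repeat split; auto. intro E. specialize (B1 w W1). specialize (B2 w N W2). rewrite E in B2. lra.
Qed.

Lemma find_point : forall D f g, Copen D -> meromorphic D f -> meromorphic D g -> ~ mero_eq D f g ->
  exists z1, D z1 /\ ~ pole f z1 /\ ~ pole g z1 /\ f z1 <> g z1.
Proof.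
  intros D f g Dop Mf Mg NE. unfold mero_eq in NE. apply not_all_ex_not in NE as [z Hz].
  apply imply_to_and in Hz as [Dz Hz].
  destruct (classic (pole f z)) as [Pf|Npf]; destruct (classic (pole g z)) as [Pg|Npg].
  - exfalso. apply Hz. split; [tauto|]. intros C; contradiction.
  - apply pole_mismatch with z; auto.
  - destruct (pole_mismatch D g f z Dop Mg Mf Dz Pg Npf) as [w [A [B [C E]]]].
    exists w. repeat split; auto.
  - exists z. repeat split; auto. intro E. apply Hz. split; [tauto|]. intros _; auto.
Qed.

Lemma phase_shift : forall h c z, phase (Cshift h c) z = pv (Cadd (h z) c).
Proof. reflexivity. Qed.

Lemma cross_C0 : forall c, cross C0 c = 0.
Proof. intros; unfold cross, C0; simpl; ring. Qed.
Lemma cross_opp : forall c, cross (Copp c) c = 0.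
Proof. intros; unfold cross, Copp; simpl; ring. Qed.

Lemma KEY : forall D f g, Cdomain D -> meromorphic D f -> meromorphic D g ->
  nonconstant_on D f -> nonconstant_on D g -> same_phase D f g -> ~ mero_eq D f g ->
  forall c, c <> C0 -> ~ same_phase D (Cshift f c) (Cshift g c).
Proof.
  intros D f g HD Mf Mg Ncf Ncg Sp NE c Nc Spc.
  pose proof HD as [Dop _].
  destruct (find_point D f g Dop Mf Mg NE) as [z1 [Dz1 [Npf [Npg Nfg]]]].
  pose proof (Cdiff_cont f z1 (mer_diff D f z1 Mf Dz1 Npf)) as Cf.
  pose proof (Cdiff_cont g z1 (mer_diff D g z1 Mg Dz1 Npg)) as Cg.
  destruct (Ccont_sub f g z1 Cf Cg (Cmod (Csub (f z1) (g z1)))) as [d1 [Hd1 B1]].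
  { apply Cmod_pos, Csub_neq0; auto. }
  destruct (proj2 Mf z1 Dz1) as [d3 [Hd3 B3]].
  destruct (proj2 Mg z1 Dz1) as [d4 [Hd4 B4]].
  destruct (Dop z1 Dz1) as [d5 [Hd5 B5]].
  set (rho := Rmin d1 (Rmin d3 (Rmin d4 d5))).
  assert (Hrho : 0 < rho) by (unfold rho; repeat apply Rmin3; auto).
  assert (BD : forall w, Cmod (Csub w z1) < rho -> D w /\ ~ pole f w /\ ~ pole g w /\ f w <> g w).
  { intros w Hw.
    assert (W1 : Cmod (Csub w z1) < d1) by (unfold rho in Hw; eapply lt_min_l; eauto).
    assert (W3 : Cmod (Csub w z1) < d3) by (unfold rho in Hw; eapply lt_min_l, lt_min_r; eauto).
    assert (W4 : Cmod (Csub w z1) < d4) by (unfold rho in Hw; eapply lt_min_l, lt_min_r, lt_min_r; eauto).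
    assert (W5 : Cmod (Csub w z1) < d5) by (unfold rho in Hw; eapply lt_min_r, lt_min_r, lt_min_r; eauto).
    repeat split; auto.
    - destruct (Cx_dec w z1) as [E|N]; [subst; auto|]. apply B3; auto.
    - destruct (Cx_dec w z1) as [E|N]; [subst; auto|]. apply B4; auto.
    - intro E. specialize (B1 w W1). rewrite E in B1.
      replace (Csub (Csub (g w) (g w)) (Csub (f z1) (g z1))) with (Copp (Csub (f z1) (g z1))) in B1 by ring.
      rewrite Cmod_opp in B1. lra. }
  assert (Dif : forall h, meromorphic D h -> (forall w, Cmod (Csub w z1) < rho -> ~ pole h w) ->
     forall w, Cmod (Csub w z1) < rho -> Cdifferentiable h w).
  { intros h Mh Nh w Hw. apply mer_diff with D; auto. apply BD; auto. }
  assert (Difff : forall w, Cmod (Csub w z1) < rho -> Cdifferentiable f w) by (apply Dif; auto; intros; apply BD; auto).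
  assert (Diffg : forall w, Cmod (Csub w z1) < rho -> Cdifferentiable g w) by (apply Dif; auto; intros; apply BD; auto).
  assert (PW : forall w, Cmod (Csub w z1) < rho -> f w <> C0 -> g w <> C0 -> Cadd (f w) c <> C0 -> Cadd (g w) c <> C0 ->
     cross (f w) c = 0).
  { intros w Hw N1 N2 N3 N4. destruct (BD w Hw) as [Dw [P1 [P2 Ne]]].
    apply (alg_key (f w) (g w) c); auto.
    - apply (Sp w); auto.
    - pose proof (Spc w Dw) as S. rewrite !phase_shift in S. apply S; auto.
      intro P; apply P1; apply (pole_shift f c w); auto.
      intro P; apply P2; apply (pole_shift g c w); auto. }
  destruct (classic (forall w, Cmod (Csub w z1) < rho -> cross (f w) c = 0)) as [AllB|NotAll].
  -
    pose proof (const_of_cross f c z1 rho Nc Hrho Difff AllB) as K.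
    apply Ncf. exists (f z1). intros z Dz. apply (global_IT D f (f z1) z1 rho); auto.
  -
    apply not_all_ex_not in NotAll as [w0 Hw0]. apply imply_to_and in Hw0 as [Hw0 Ncr].
    assert (Cf0 : Ccont f w0) by (apply Cdiff_cont, Difff; auto).
    assert (Cg0 : Ccont g w0) by (apply Cdiff_cont, Diffg; auto).
    set (eta := Rabs (cross (f w0) c)). assert (Heta : 0 < eta) by (apply Rabs_pos_lt; auto).
    assert (Hc : 0 < Cmod c) by (apply Cmod_pos; auto).
    destruct (Cf0 (eta / (2 * Cmod c + 1))) as [e1 [He1 F1]]. { apply Rdiv_lt_0_compat; lra. }
    destruct (Cg0 (Cmod c / 2)) as [e2 [He2 G2]]. { lra. }
    set (r := Rmin (Rmin e1 e2) (rho - Cmod (Csub w0 z1))).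
    assert (Hr : 0 < r) by (unfold r; apply Rmin3; [apply Rmin3|]; lra).
    assert (InB : forall w, Cmod (Csub w w0) < r -> Cmod (Csub w z1) < rho).
    { intros w Hw. pose proof (Cmod_tri3 w w0 z1). assert (r <= rho - Cmod (Csub w0 z1)) by apply Rmin_r. lra. }
    assert (CRnz : forall w, Cmod (Csub w w0) < r -> cross (f w) c <> 0).
    { intros w Hw E. assert (Cmod (Csub w w0) < e1) by (eapply Rlt_le_trans; [apply Hw|]; eapply Rle_trans; [apply Rmin_l|apply Rmin_l]).
      specialize (F1 w H). pose proof (cross_bound (Csub (f w) (f w0)) c).
      replace (cross (Csub (f w) (f w0)) c) with (cross (f w) c - cross (f w0) c) in H0 by (unfold cross, Csub, Cadd, Copp; simpl; ring).
      rewrite E, Rminus_0_l, Rabs_Ropp in H0. fold eta in H0.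
      assert (2 * Cmod (Csub (f w) (f w0)) * Cmod c <= eta / (2 * Cmod c + 1) * (2 * Cmod c)).
      { replace (2 * Cmod (Csub (f w) (f w0)) * Cmod c) with (Cmod (Csub (f w) (f w0)) * (2 * Cmod c)) by ring.
        apply Rmult_le_compat_r; lra. }
      assert (eta / (2 * Cmod c + 1) * (2 * Cmod c) < eta).
      { replace (eta / (2 * Cmod c + 1) * (2 * Cmod c)) with (eta * ((2 * Cmod c) / (2 * Cmod c + 1))) by (field; lra).
        assert ((2 * Cmod c) / (2 * Cmod c + 1) < 1). { apply Rmult_lt_reg_r with (2 * Cmod c + 1); [lra|]. unfold Rdiv. rewrite Rmult_assoc, Rinv_l by lra. lra. }
        nra. }
      lra. }
    assert (Gv : forall w, Cmod (Csub w w0) < r -> g w = C0 \/ Cadd (g w) c = C0).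
    { intros w Hw. pose proof (CRnz w Hw) as Cr.
      assert (f w <> C0) by (intro E; apply Cr; rewrite E; apply cross_C0).
      assert (Cadd (f w) c <> C0).
      { intro E. apply Cr. replace (f w) with (Copp c) by (replace (f w) with (Csub (Cadd (f w) c) c) by ring; rewrite E; ring). apply cross_opp. }
      destruct (Cx_dec (g w) C0) as [E|N2]; auto. destruct (Cx_dec (Cadd (g w) c) C0) as [E|N4]; auto.
      exfalso. apply Cr. apply PW; auto. }
    assert (Gconst : forall w, Cmod (Csub w w0) < r -> g w = g w0).
    { intros w Hw. assert (Hw0' : Cmod (Csub w0 w0) < r) by (replace (Csub w0 w0) with C0 by ring; rewrite Cmod_C0; auto).
      assert (Cmod (Csub w w0) < e2) by (eapply Rlt_le_trans; [apply Hw|]; eapply Rle_trans; [apply Rmin_l|apply Rmin_r]).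
      specialize (G2 w H).
      destruct (Gv w Hw) as [A|A]; destruct (Gv w0 Hw0') as [B|B].
      - rewrite A, B; auto.
      - exfalso. replace (g w0) with (Copp c) in G2 by (replace (g w0) with (Csub (Cadd (g w0) c) c) by ring; rewrite B; ring).
        rewrite A in G2. replace (Csub C0 (Copp c)) with c in G2 by ring. lra.
      - exfalso. replace (g w) with (Copp c) in G2 by (replace (g w) with (Csub (Cadd (g w) c) c) by ring; rewrite A; ring).
        rewrite B in G2. replace (Csub (Copp c) C0) with (Copp c) in G2 by ring. rewrite Cmod_opp in G2. lra.
      - replace (g w) with (Csub (Cadd (g w) c) c) by ring. replace (g w0) with (Csub (Cadd (g w0) c) c) by ring.
        rewrite A, B; auto. }
    apply Ncg. exists (g w0). intros z Dz. apply (global_IT D g (g w0) w0 r); auto.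
    apply BD; auto.
Qed.

Theorem mainTheorem2 (D : Cx -> Prop) (f g : Cx -> Cx) :
  Cdomain D ->
  meromorphic D f -> meromorphic D g ->
  nonconstant_on D f -> nonconstant_on D g ->
  same_phase D f g ->
  (~ mero_eq D f g <-> exists c : Cx, c <> C0 /\ ~ same_phase D (Cshift f c) (Cshift g c)) /\
  ((exists c : Cx, c <> C0 /\ ~ same_phase D (Cshift f c) (Cshift g c)) <->
   (forall c : Cx, c <> C0 -> ~ same_phase D (Cshift f c) (Cshift g c))).
Proof.
  intros HD Mf Mg Ncf Ncg Sp.
  pose proof HD as [Dop _].
  assert (I2 : ~ mero_eq D f g -> exists c, c <> C0 /\ ~ same_phase D (Cshift f c) (Cshift g c)).
  { intros NE. destruct (find_point D f g Dop Mf Mg NE) as [z1 [Dz1 [Npf [Npg Nfg]]]].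
    destruct (choose_c (f z1) (g z1) Nfg) as [c [Nc [Na [Nb Np]]]].
    exists c. split; auto. intros S. apply Np. rewrite <- !phase_shift. apply S; auto.
    intro P; apply Npf; apply (pole_shift f c z1); auto.
    intro P; apply Npg; apply (pole_shift g c z1); auto. }
  assert (II1 : (exists c, c <> C0 /\ ~ same_phase D (Cshift f c) (Cshift g c)) -> ~ mero_eq D f g).
  { intros [c [Nc Nsp]] Heq. apply Nsp. intros z Dz Np1 Np2 _ _.
    rewrite !phase_shift. destruct (Heq z Dz) as [_ E]. rewrite E; auto.
    intro P; apply Np1; apply (pole_shift f c z); auto. }
  split; split.
  - apply I2.
  - apply II1.
  - intros H c Nc. apply KEY; auto.
  - intros H. exists Cone. split. apply Cone_neq_C0. apply H. apply Cone_neq_C0.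
Qed.
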